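(* Let $R>1$ and $f\in H(\mathbb{D}_R)$. Then for any $r$ with $0<r<R$, \[\lim_{q\to1^+}L_q(f;z)=L_1(f;z)\] uniformly on $\{z:|z|\le r\}$.
   Context: $\mathbb{D}_R=\{z\in\mathbb{C}:|z|<R\}$, $H(\mathbb{D}_R)$ the analytic functions on it. For $p>0$, $p\ne1$, $D_pf(z)=\frac{f(pz)-f(z)}{(p-1)z}$ for $z\ne0$ and $D_pf(0)=f'(0)$. For $q>1$ and $|z|<R/q^2$, $L_q(f;z)=\frac{(1-z)\,q\,(D_qf(z)-D_{q^{-1}}f(z))}{q-1}$ (for any fixed $z$ this is defined for all $q>1$ close enough to $1$), and $L_1(f;z)=f''(z)\,z(1-z)$. *)

(* Defs.v *)
From Stdlib Require Import Reals.
From Coquelicot Require Import Coquelicot.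
Open Scope R_scope.

Definition holomorphic_on_disk (Rad : R) (f : C -> C) : Prop :=
  forall z : C, Cmod z < Rad -> @ex_derive C_AbsRing C_NormedModule f z.

Definition Dp (p : R) (f : C -> C) (z : C) : C :=
  if Req_EM_T (Cmod z) 0 then C_derive f z
  else Cdiv (Cminus (f (Cmult (RtoC p) z)) (f z)) (Cmult (RtoC (p - 1)) z).

Definition Lq (q : R) (f : C -> C) (z : C) : C :=
  Cdiv (Cmult (Cmult (Cminus (RtoC 1) z) (RtoC q))
              (Cminus (Dp q f z) (Dp (/ q) f z)))
       (RtoC (q - 1)).

Definition L1 (f : C -> C) (z : C) : C :=
  Cmult (Cmult (C_derive (C_derive f) z) z) (Cminus (RtoC 1) z).

(* Main.v *)
Require Import Defs.
From Stdlib Require Import Reals Lra Lia Psatz Classical.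
From Coquelicot Require Import Coquelicot.
Open Scope R_scope.


Lemma normCR (x : C) : @norm R_AbsRing C_R_NormedModule x = Cmod x.
Proof. unfold norm; simpl. unfold prod_norm, Cmod; simpl. unfold norm; simpl. unfold abs; simpl.
 f_equal. rewrite !Rmult_1_r. rewrite <- !Rabs_mult. rewrite !Rabs_pos_eq by nra. reflexivity.
Qed.

Lemma scalCR (x : R) (y : C) : @scal R_AbsRing C_R_NormedModule x y = Cmult (RtoC x) y.
Proof. destruct y as [a b]. unfold scal; simpl. unfold prod_scal; simpl. unfold scal; simpl. unfold mult; simpl.
 unfold Cmult, RtoC; simpl. f_equal; ring. Qed.

Definition CD (g : C -> C) (z l : C) : Prop :=
  forall eps, 0 < eps -> exists delta, 0 < delta /\
   forall w, Cmod (w - z) < delta -> Cmod (g w - g z - (w - z) * l) <= eps * Cmod (w - z).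

Definition RD (g : R -> C) (t : R) (l : C) : Prop :=
  forall eps, 0 < eps -> exists delta, 0 < delta /\
   forall s, Rabs (s - t) < delta -> Cmod (g s - g t - RtoC (s - t) * l) <= eps * Rabs (s - t).

Definition CC (g : C -> C) (z : C) : Prop :=
  forall eps, 0 < eps -> exists delta, 0 < delta /\
   forall w, Cmod (w - z) < delta -> Cmod (g w - g z) < eps.

Definition RC (g : R -> C) (t : R) : Prop :=
  forall eps, 0 < eps -> exists delta, 0 < delta /\
   forall s, Rabs (s - t) < delta -> Cmod (g s - g t) < eps.

Lemma CD_of_derive g z l : @is_derive C_AbsRing C_NormedModule g z l -> CD g z l.
Proof.
  intros [_ Hd] eps Heps.
  specialize (Hd z (fun P H => H) (mkposreal eps Heps)).
  destruct Hd as [d Hd]. exists d. split. apply cond_pos.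
  intros w Hw. apply (Hd w). exact Hw.
Qed.

Lemma derive_of_CD g z l : CD g z l -> @is_derive C_AbsRing C_NormedModule g z l.
Proof.
  intros H. split. apply is_linear_scal_l.
  intros x Hx. apply (@is_filter_lim_locally_unique _ (AbsRing_NormedModule C_AbsRing)) in Hx. subst x.
  intros [eps Heps]. destruct (H eps Heps) as [d [Hd Hw]].
  exists (mkposreal d Hd). intros y Hy.
  apply (Hw y). exact Hy.
Qed.

Lemma derive_of_RD g t l : RD g t l -> @is_derive R_AbsRing C_R_NormedModule g t l.
Proof.
  intros H. split. apply is_linear_scal_l.
  intros x Hx. apply (@is_filter_lim_locally_unique _ (AbsRing_NormedModule R_AbsRing)) in Hx. subst x.
  intros [eps Heps]. destruct (H eps Heps) as [d [Hd Hw]].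
  exists (mkposreal d Hd). intros y Hy. simpl.
  rewrite !normCR. rewrite scalCR.
  specialize (Hw y Hy). unfold norm; simpl. unfold abs; simpl. exact Hw.
Qed.

Lemma CC_of_cont g z : @continuous C_UniformSpace C_UniformSpace g z -> CC g z.
Proof.
  intros H eps Heps.
  assert (Hp : 0 < eps / sqrt 2).
  { apply Rdiv_lt_0_compat; auto. apply sqrt_lt_R0; lra. }
  assert (H1 := H (ball (g z) (mkposreal _ Hp)) (locally_ball _ _)).
  destruct H1 as [d H1]. exists d. split. apply cond_pos.
  intros w Hw. specialize (H1 w (C_NormedModule_mixin_compat1 _ _ _ Hw)).
  apply C_NormedModule_mixin_compat2 in H1. simpl in H1.
  replace eps with (sqrt 2 * (eps / sqrt 2)). exact H1.
  field. apply Rgt_not_eq. apply sqrt_lt_R0; lra.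
Qed.

Lemma cont_of_RC g t : RC g t -> @continuous R_UniformSpace C_UniformSpace g t.
Proof.
  intros H P [eps HP].
  destruct (H eps (cond_pos eps)) as [d [Hd Hs]].
  exists (mkposreal d Hd). intros s Hs'. apply HP.
  apply C_NormedModule_mixin_compat1. apply Hs. exact Hs'.
Qed.

Lemma cont_of_CC g z : CC g z -> @continuous C_UniformSpace C_UniformSpace g z.
Proof.
  intros H P [eps HP].
  destruct (H eps (cond_pos eps)) as [d [Hd Hs]].
  assert (Hd2 : 0 < d / 2) by lra.
  exists (mkposreal _ Hd2). intros s Hs'. apply HP.
  apply C_NormedModule_mixin_compat1. apply Hs.
  apply (C_NormedModule_mixin_compat2 z s (mkposreal _ Hd2)) in Hs'. simpl in Hs'.
  assert (sqrt 2 < 2). { rewrite <- (sqrt_square 2) at 2 by lra. apply sqrt_lt_1; lra. }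
  change (Cmod (s - z) < sqrt 2 * (d/2)) in Hs'. change (Cmod (s - z) < d). nra.
Qed.



Lemma Cmod_le_sum (w : C) : Cmod w <= Rabs (fst w) + Rabs (snd w).
Proof.
  destruct w as [a b]. unfold Cmod; simpl.
  rewrite <- (sqrt_square (Rabs a + Rabs b)) by (pose proof (Rabs_pos a); pose proof (Rabs_pos b); lra).
  apply sqrt_le_1_alt.
  pose proof (Rabs_pos a); pose proof (Rabs_pos b).
  replace (a * (a * 1)) with (Rabs a * Rabs a) by (rewrite <- Rabs_mult, Rabs_pos_eq by nra; ring).
  replace (b * (b * 1)) with (Rabs b * Rabs b) by (rewrite <- Rabs_mult, Rabs_pos_eq by nra; ring).
  nra.
Qed.

Lemma chain_RD (g : C -> C) (gam : R -> C) t l L :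
  CD g (gam t) l -> RD gam t L -> RD (fun s => g (gam s)) t (l * L).
Proof.
  intros Hg Hgam eps Heps.
  pose proof (Cmod_ge_0 L) as HL. pose proof (Cmod_ge_0 l) as Hl.
  set (e1 := eps / (2 * (Cmod L + 1))). set (e2 := eps / (2 * (Cmod l + 1))).
  assert (He1 : 0 < e1) by (unfold e1; apply Rdiv_lt_0_compat; lra).
  assert (He2 : 0 < e2) by (unfold e2; apply Rdiv_lt_0_compat; lra).
  destruct (Hgam 1 Rlt_0_1) as [d1 [Hd1 H1]].
  destruct (Hg e1 He1) as [d2 [Hd2 H2]].
  destruct (Hgam e2 He2) as [d3 [Hd3 H3]].
  exists (Rmin d1 (Rmin d3 (d2 / (Cmod L + 1)))). split.
  { apply Rmin_pos; auto. apply Rmin_pos; auto. apply Rdiv_lt_0_compat; lra. }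
  intros s Hs.
  assert (Hs1 : Rabs (s - t) < d1) by (eapply Rlt_le_trans; [exact Hs|apply Rmin_l]).
  assert (Hs3 : Rabs (s - t) < d3) by (eapply Rlt_le_trans; [exact Hs|eapply Rle_trans; [apply Rmin_r|apply Rmin_l]]).
  assert (Hs2 : Rabs (s - t) < d2 / (Cmod L + 1)) by (eapply Rlt_le_trans; [exact Hs|eapply Rle_trans; [apply Rmin_r|apply Rmin_r]]).
  specialize (H1 s Hs1). specialize (H3 s Hs3).
  assert (Hg1 : Cmod (gam s - gam t) <= (Cmod L + 1) * Rabs (s - t)).
  { replace (gam s - gam t)%C with ((gam s - gam t - RtoC (s - t) * L) + RtoC (s - t) * L)%C by ring.
    eapply Rle_trans. apply Cmod_triangle. rewrite Cmod_mult, Cmod_R. nra. }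
  assert (Hg2 : Cmod (gam s - gam t) < d2).
  { eapply Rle_lt_trans. exact Hg1. 
    apply (Rmult_lt_compat_l (Cmod L + 1)) in Hs2; [|lra].
    replace ((Cmod L + 1) * (d2 / (Cmod L + 1))) with d2 in Hs2 by (field; lra). lra. }
  specialize (H2 _ Hg2).
  replace (g (gam s) - g (gam t) - RtoC (s - t) * (l * L))%C with
    ((g (gam s) - g (gam t) - (gam s - gam t) * l) + l * (gam s - gam t - RtoC (s - t) * L))%C by ring.
  eapply Rle_trans. apply Cmod_triangle. rewrite Cmod_mult.
  pose proof (Rabs_pos (s - t)).
  assert (e1 * Cmod (gam s - gam t) <= eps / 2 * Rabs (s - t)).
  { apply Rle_trans with (e1 * ((Cmod L + 1) * Rabs (s - t))). apply Rmult_le_compat_l; lra.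
    unfold e1. apply Req_le. field. lra. }
  assert (Cmod l * Cmod (gam s - gam t - RtoC (s - t) * L) <= eps / 2 * Rabs (s - t)).
  { apply Rle_trans with (Cmod l * (e2 * Rabs (s - t))). apply Rmult_le_compat_l; lra.
    unfold e2. apply Rle_trans with ((Cmod l / (Cmod l + 1)) * (eps / 2) * Rabs (s - t)).
    apply Req_le. field. lra.
    apply Rmult_le_compat_r; auto. 
    assert (Cmod l / (Cmod l + 1) <= 1). { apply Rmult_le_reg_r with (Cmod l + 1). lra. field_simplify; lra. }
    nra. }
  lra.
Qed.


Definition CInt (g : R -> C) (a b : R) : C := @RInt C_R_CompleteNormedModule g a b.
Definition CexI (g : R -> C) (a b : R) : Prop := @ex_RInt C_R_NormedModule g a b.
Definition CisI (g : R -> C) (a b : R) (l : C) : Prop := @is_RInt C_R_NormedModule g a b l.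

Lemma CInt_correct g a b : CexI g a b -> CisI g a b (CInt g a b).
Proof. intros H. apply (@RInt_correct C_R_CompleteNormedModule). exact H. Qed.

Lemma CInt_unique g a b l : CisI g a b l -> CInt g a b = l.
Proof. intros H. apply (@is_RInt_unique C_R_CompleteNormedModule). exact H. Qed.

Lemma CisI_ex g a b l : CisI g a b l -> CexI g a b.
Proof. intros H. exists l. exact H. Qed.

Lemma CisI_mult g a b l c : CisI g a b l -> CisI (fun x => c * g x)%C a b (c * l)%C.
Proof.
  intros H.
  assert (H1 := is_RInt_fct_extend_fst g a b l H).
  assert (H2 := is_RInt_fct_extend_snd g a b l H).
  destruct c as [c1 c2].
  assert (K1 := @is_RInt_minus R_NormedModule _ _ a b _ _ (@is_RInt_scal R_NormedModule _ a b c1 _ H1) (@is_RInt_scal R_NormedModule _ a b c2 _ H2)).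
  assert (K2 := @is_RInt_plus R_NormedModule _ _ a b _ _ (@is_RInt_scal R_NormedModule _ a b c1 _ H2) (@is_RInt_scal R_NormedModule _ a b c2 _ H1)).
  assert (K := is_RInt_fct_extend_pair (fun x => ((c1,c2) * g x)%C) a b _ _ K1 K2).
  destruct l as [l1 l2].
  eapply is_RInt_ext; [|exact K]. reflexivity.
Qed.

Lemma CInt_mult g a b c : CexI g a b -> CInt (fun x => c * g x)%C a b = (c * CInt g a b)%C.
Proof. intros H. apply CInt_unique. apply CisI_mult. apply CInt_correct. exact H. Qed.

Lemma CInt_plus f g a b : CexI f a b -> CexI g a b ->
  CInt (fun x => f x + g x)%C a b = (CInt f a b + CInt g a b)%C.
Proof. intros H1 H2. apply (@RInt_plus C_R_CompleteNormedModule); auto. Qed.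

Lemma CInt_minus f g a b : CexI f a b -> CexI g a b ->
  CInt (fun x => f x - g x)%C a b = (CInt f a b - CInt g a b)%C.
Proof. intros H1 H2. apply (@RInt_minus C_R_CompleteNormedModule); auto. Qed.

Lemma CInt_Chasles f a b c : CexI f a b -> CexI f b c ->
  (CInt f a b + CInt f b c)%C = CInt f a c.
Proof. intros H1 H2. apply (@RInt_Chasles C_R_CompleteNormedModule); auto. Qed.

Lemma CInt_point f a : CInt f a a = 0%C.
Proof. apply (@RInt_point C_R_CompleteNormedModule). Qed.

Lemma CInt_swap f a b : CexI f a b -> CInt f b a = (- CInt f a b)%C.
Proof. intros H. symmetry. apply (@opp_RInt_swap C_R_CompleteNormedModule). exact H. Qed.

Lemma CInt_ext f g a b : (forall x, Rmin a b < x < Rmax a b -> f x = g x) -> CInt f a b = CInt g a b.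
Proof. intros H. apply (@RInt_ext C_R_CompleteNormedModule). exact H. Qed.

Lemma CexI_ext f g a b : (forall x, Rmin a b < x < Rmax a b -> f x = g x) -> CexI f a b -> CexI g a b.
Proof. intros H [l Hl]. exists l. eapply is_RInt_ext; eauto. Qed.

Lemma CInt_bound g a b M : a <= b -> (forall x, a <= x <= b -> Cmod (g x) <= M) -> CexI g a b ->
  Cmod (CInt g a b) <= (b - a) * M.
Proof.
  intros Hab HM Hex. rewrite <- normCR.
  apply (@norm_RInt_le_const C_R_NormedModule g a b _ M Hab).
  intros x Hx. rewrite normCR. auto. apply CInt_correct. exact Hex.
Qed.

Lemma CInt_bound_fun g (h : R -> R) a b : a <= b -> (forall x, a <= x <= b -> Cmod (g x) <= h x) -> CexI g a b ->
  ex_RInt h a b -> Cmod (CInt g a b) <= RInt h a b.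
Proof.
  intros Hab HM Hex Hh. rewrite <- normCR.
  apply (@norm_RInt_le C_R_NormedModule g h a b _ _ Hab).
  intros x Hx. rewrite normCR. auto. apply CInt_correct. exact Hex.
  apply (@RInt_correct R_CompleteNormedModule). exact Hh.
Qed.

Lemma RC_of_cont g t : @continuous R_UniformSpace C_UniformSpace g t -> RC g t.
Proof.
  intros H eps Heps.
  assert (Hp : 0 < eps / sqrt 2).
  { apply Rdiv_lt_0_compat; auto. apply sqrt_lt_R0; lra. }
  assert (H1 := H (ball (g t) (mkposreal _ Hp)) (locally_ball _ _)).
  destruct H1 as [d H1]. exists d. split. apply cond_pos.
  intros w Hw. specialize (H1 w Hw).
  apply C_NormedModule_mixin_compat2 in H1. simpl in H1.
  replace eps with (sqrt 2 * (eps / sqrt 2)). exact H1.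
  field. apply Rgt_not_eq. apply sqrt_lt_R0; lra.
Qed.

Lemma CexI_cont g a b : (forall x, Rmin a b <= x <= Rmax a b -> RC g x) -> CexI g a b.
Proof.
  intros H. apply (@ex_RInt_continuous C_R_CompleteNormedModule).
  intros z Hz. apply cont_of_RC. auto.
Qed.

Lemma CInt_FTC (F g : R -> C) a b :
  (forall x, Rmin a b <= x <= Rmax a b -> RD F x (g x)) ->
  (forall x, Rmin a b <= x <= Rmax a b -> RC g x) ->
  CInt g a b = (F b - F a)%C.
Proof.
  intros H1 H2. apply CInt_unique.
  apply (@is_RInt_derive C_R_CompleteNormedModule F g a b).
  intros x Hx. apply derive_of_RD. auto.
  intros x Hx. apply cont_of_RC. auto.
Qed.

Lemma RC_of_RD g t l : RD g t l -> RC g t.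
Proof.
  intros H eps Heps.
  destruct (H 1 Rlt_0_1) as [d [Hd H1]].
  exists (Rmin d (eps / (Cmod l + 2))). split.
  { apply Rmin_pos; auto. apply Rdiv_lt_0_compat; auto. pose proof (Cmod_ge_0 l); lra. }
  intros s Hs.
  assert (Hs1 : Rabs (s - t) < d) by (eapply Rlt_le_trans; [exact Hs|apply Rmin_l]).
  assert (Hs2 : Rabs (s - t) < eps / (Cmod l + 2)) by (eapply Rlt_le_trans; [exact Hs|apply Rmin_r]).
  specialize (H1 s Hs1).
  replace (g s - g t)%C with ((g s - g t - RtoC (s - t) * l) + RtoC (s - t) * l)%C by ring.
  eapply Rle_lt_trans. apply Cmod_triangle. rewrite Cmod_mult, Cmod_R.
  pose proof (Cmod_ge_0 l). pose proof (Rabs_pos (s - t)).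
  apply (Rmult_lt_compat_l (Cmod l + 2)) in Hs2; [|lra].
  replace ((Cmod l + 2) * (eps / (Cmod l + 2))) with eps in Hs2 by (field; lra).
  nra.
Qed.

Lemma CC_of_CD g z l : CD g z l -> CC g z.
Proof.
  intros H eps Heps.
  destruct (H 1 Rlt_0_1) as [d [Hd H1]].
  exists (Rmin d (eps / (Cmod l + 2))). split.
  { apply Rmin_pos; auto. apply Rdiv_lt_0_compat; auto. pose proof (Cmod_ge_0 l); lra. }
  intros s Hs.
  assert (Hs1 : Cmod (s - z) < d) by (eapply Rlt_le_trans; [exact Hs|apply Rmin_l]).
  assert (Hs2 : Cmod (s - z) < eps / (Cmod l + 2)) by (eapply Rlt_le_trans; [exact Hs|apply Rmin_r]).
  specialize (H1 s Hs1).
  replace (g s - g z)%C with ((g s - g z - (s - z) * l) + (s - z) * l)%C by ring.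
  eapply Rle_lt_trans. apply Cmod_triangle. rewrite Cmod_mult.
  pose proof (Cmod_ge_0 l). pose proof (Cmod_ge_0 (s - z)).
  apply (Rmult_lt_compat_l (Cmod l + 2)) in Hs2; [|lra].
  replace ((Cmod l + 2) * (eps / (Cmod l + 2))) with eps in Hs2 by (field; lra).
  nra.
Qed.

Lemma RC_comp (g : C -> C) (gam : R -> C) t : RC gam t -> CC g (gam t) -> RC (fun s => g (gam s)) t.
Proof.
  intros H1 H2 eps Heps.
  destruct (H2 eps Heps) as [d [Hd H2']].
  destruct (H1 d Hd) as [d' [Hd' H1']].
  exists d'. split; auto.
Qed.


Lemma CD_of_derive' g z l : @is_derive C_AbsRing (AbsRing_NormedModule C_AbsRing) g z l -> CD g z l.
Proof.
  intros [_ Hd] eps Heps.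
  specialize (Hd z (fun P H => H) (mkposreal eps Heps)).
  destruct Hd as [d Hd]. exists d. split. apply cond_pos.
  intros w Hw. apply (Hd w). exact Hw.
Qed.

Lemma derive_of_CD' g z l : CD g z l -> @is_derive C_AbsRing (AbsRing_NormedModule C_AbsRing) g z l.
Proof.
  intros H. split. apply is_linear_scal_l.
  intros x Hx. apply (@is_filter_lim_locally_unique _ (AbsRing_NormedModule C_AbsRing)) in Hx.
  subst x.
  intros [eps Heps]. destruct (H eps Heps) as [d [Hd Hw]].
  exists (mkposreal d Hd). intros y Hy.
  apply (Hw y). exact Hy.
Qed.

Lemma CD_plus f g z a b : CD f z a -> CD g z b -> CD (fun w => f w + g w)%C z (a + b)%C.
Proof.
  intros H1 H2. apply CD_of_derive.
  apply (@is_derive_plus C_AbsRing C_NormedModule f g z a b); apply derive_of_CD; auto.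
Qed.

Lemma CD_mult f g z a b : CD f z a -> CD g z b -> CD (fun w => f w * g w)%C z (a * g z + f z * b)%C.
Proof.
  intros H1 H2. apply CD_of_derive'.
  apply (@is_derive_mult C_AbsRing f g z a b); try (apply derive_of_CD'; auto).
  intros. apply Cmult_comm.
Qed.

Lemma CD_const c z : CD (fun _ => c) z 0%C.
Proof. apply CD_of_derive'. exact (@is_derive_const C_AbsRing (AbsRing_NormedModule C_AbsRing) c z). Qed.

Lemma CD_id z : CD (fun w => w) z 1%C.
Proof. apply CD_of_derive'. exact (@is_derive_id C_AbsRing z). Qed.

Lemma CD_ext f g z l : (forall w, f w = g w) -> CD f z l -> CD g z l.
Proof. intros E H eps Heps. destruct (H eps Heps) as [d [Hd H']]. exists d; split; auto.
  intros w Hw. rewrite <- !E. auto. Qed.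

Lemma CD_ext_loc f g z l r : 0 < r -> (forall w, Cmod (w - z) < r -> f w = g w) -> CD f z l -> CD g z l.
Proof. intros Hr E H eps Heps. destruct (H eps Heps) as [d [Hd H']]. exists (Rmin d r); split.
  apply Rmin_pos; auto.
  intros w Hw. rewrite <- (E w), <- (E z). apply H'. eapply Rlt_le_trans; [exact Hw|apply Rmin_l].
  replace (z - z)%C with (RtoC 0) by ring. rewrite Cmod_0. auto.
  eapply Rlt_le_trans; [exact Hw|apply Rmin_r].
Qed.

Lemma CD_unique f z l1 l2 : CD f z l1 -> CD f z l2 -> l1 = l2.
Proof.
  intros H1 H2.
  apply derive_of_CD, is_C_derive_unique in H1.
  apply derive_of_CD, is_C_derive_unique in H2. congruence.
Qed.

Lemma C_derive_of_CD f z l : CD f z l -> C_derive f z = l.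
Proof. intros H. apply is_C_derive_unique, derive_of_CD, H. Qed.

Lemma Cmod_sub_ge x y : Cmod x - Cmod y <= Cmod (x - y).
Proof.
  replace x with ((x - y) + y)%C at 1 by ring.
  pose proof (Cmod_triangle (x - y) y). lra.
Qed.

Lemma CD_inv (z : C) : z <> RtoC 0 -> CD (fun w => / w)%C z (- / (z * z))%C.
Proof.
  intros Hz eps Heps.
  assert (Hm : 0 < Cmod z) by (apply (proj1 (Cmod_gt_0 z) Hz)).
  exists (Rmin (Cmod z / 2) (eps * (Cmod z * Cmod z * Cmod z) / 2)). split.
  assert (Hm3 : 0 < Cmod z * Cmod z * Cmod z) by (repeat apply Rmult_lt_0_compat; auto).
  { apply Rmin_pos. lra. apply Rdiv_lt_0_compat; [|lra]. apply Rmult_lt_0_compat; auto. }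
  intros w Hw.
  assert (Hw1 : Cmod (w - z) < Cmod z / 2) by (eapply Rlt_le_trans; [exact Hw|apply Rmin_l]).
  assert (Hw2 : Cmod (w - z) < eps * (Cmod z * Cmod z * Cmod z) / 2) by (eapply Rlt_le_trans; [exact Hw|apply Rmin_r]).
  assert (Hwz : Cmod z / 2 <= Cmod w).
  { pose proof (Cmod_sub_ge z w). replace (z - w)%C with (- (w - z))%C in H by ring. rewrite Cmod_opp in H. lra. }
  assert (Hw0 : w <> 0%C). { intros E. subst. rewrite Cmod_0 in Hwz. lra. }
  replace (/ w - / z - (w - z) * - / (z * z))%C with ((w - z) * (w - z) / (w * (z * z)))%C by (field; auto).
  rewrite Cmod_div. 2: { intros E. apply (f_equal Cmod) in E. rewrite !Cmod_mult, Cmod_0 in E.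
     assert (0 < Cmod w * (Cmod z * Cmod z)) by (apply Rmult_lt_0_compat; nra). lra. }
  rewrite !Cmod_mult.
  pose proof (Cmod_ge_0 (w - z)).
  apply Rle_trans with (Cmod (w - z) * Cmod (w - z) / (Cmod z / 2 * (Cmod z * Cmod z))).
  { unfold Rdiv. apply Rmult_le_compat_l. nra. apply Rinv_le_contravar. nra. apply Rmult_le_compat_r; nra. }
  apply Rle_trans with (Cmod (w - z) * (eps * (Cmod z * Cmod z * Cmod z) / 2) / (Cmod z / 2 * (Cmod z * Cmod z))).
  { unfold Rdiv. apply Rmult_le_compat_r. apply Rlt_le, Rinv_0_lt_compat. nra. apply Rmult_le_compat_l; nra. }
  apply Req_le. field. lra.
Qed.


Definition Hs (g : C -> C) (c a b : R) : C := CInt (fun x => g (x, c)) a b.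
Definition Vs (g : C -> C) (x c d : R) : C := CInt (fun y => g (x, y)) c d.
Definition Rect (g : C -> C) (a b c d : R) : C :=
  (Hs g c a b + Ci * Vs g b c d - Hs g d a b - Ci * Vs g a c d)%C.
Definition InR (a b c d : R) (w : C) : Prop := a <= fst w <= b /\ c <= snd w <= d.
Definition RectInt (g : C -> C) (a b c d : R) : Prop :=
  CexI (fun x => g (x, c)) a b /\ CexI (fun x => g (x, d)) a b /\
  CexI (fun y => g (a, y)) c d /\ CexI (fun y => g (b, y)) c d.

Lemma path_h (s t c : R) : ((s, c) - (t, c))%C = RtoC (s - t).
Proof. unfold Cminus, Cplus, Copp, RtoC; simpl. f_equal; ring. Qed.
Lemma path_v (x s t : R) : ((x, s) - (x, t))%C = (RtoC (s - t) * Ci)%C.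
Proof. unfold Cminus, Cplus, Copp, RtoC, Cmult, Ci; simpl. f_equal; ring. Qed.

Lemma RD_h c t : RD (fun x => (x, c)) t 1%C.
Proof. intros eps Heps. exists 1. split. lra. intros s _. rewrite path_h.
  replace (RtoC (s - t) - RtoC (s - t) * 1)%C with (RtoC 0) by ring. rewrite Cmod_0.
  pose proof (Rabs_pos (s - t)). nra. Qed.
Lemma RD_v x t : RD (fun y => (x, y)) t Ci.
Proof. intros eps Heps. exists 1. split. lra. intros s _. rewrite path_v.
  replace (RtoC (s - t) * Ci - RtoC (s - t) * Ci)%C with (RtoC 0) by ring. rewrite Cmod_0.
  pose proof (Rabs_pos (s - t)). nra. Qed.

Lemma CexI_h g c a b : a <= b -> (forall x, a <= x <= b -> CC g (x, c)) -> CexI (fun x => g (x, c)) a b.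
Proof. intros Hab H. apply CexI_cont. intros x Hx. rewrite Rmin_left, Rmax_right in Hx by lra.
  apply (RC_comp g (fun x => (x, c))). eapply RC_of_RD. apply RD_h. auto. Qed.
Lemma CexI_v g x c d : c <= d -> (forall y, c <= y <= d -> CC g (x, y)) -> CexI (fun y => g (x, y)) c d.
Proof. intros Hab H. apply CexI_cont. intros y Hy. rewrite Rmin_left, Rmax_right in Hy by lra.
  apply (RC_comp g (fun y => (x, y))). eapply RC_of_RD. apply RD_v. auto. Qed.

Lemma RectInt_of_cont g a b c d : a <= b -> c <= d -> (forall w, InR a b c d w -> CC g w) -> RectInt g a b c d.
Proof.
  intros Hab Hcd H. unfold InR in H. repeat split.
  apply CexI_h; auto; intros; apply H; simpl; lra.
  apply CexI_h; auto; intros; apply H; simpl; lra.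
  apply CexI_v; auto; intros; apply H; simpl; lra.
  apply CexI_v; auto; intros; apply H; simpl; lra.
Qed.

Lemma Rect_splitX g a m b c d :
  CexI (fun x => g (x, c)) a m -> CexI (fun x => g (x, c)) m b ->
  CexI (fun x => g (x, d)) a m -> CexI (fun x => g (x, d)) m b ->
  Rect g a b c d = (Rect g a m c d + Rect g m b c d)%C.
Proof.
  intros H1 H2 H3 H4. unfold Rect, Hs.
  rewrite <- (CInt_Chasles _ a m b H1 H2). rewrite <- (CInt_Chasles _ a m b H3 H4). ring.
Qed.

Lemma Rect_splitY g a b c n d :
  CexI (fun y => g (a, y)) c n -> CexI (fun y => g (a, y)) n d ->
  CexI (fun y => g (b, y)) c n -> CexI (fun y => g (b, y)) n d ->
  Rect g a b c d = (Rect g a b c n + Rect g a b n d)%C.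
Proof.
  intros H1 H2 H3 H4. unfold Rect, Vs.
  rewrite <- (CInt_Chasles _ c n d H1 H2). rewrite <- (CInt_Chasles _ c n d H3 H4). ring.
Qed.

Lemma Rect_degX g a c d : Rect g a a c d = RtoC 0.
Proof. unfold Rect, Hs. rewrite !CInt_point. ring. Qed.
Lemma Rect_degY g a b c : Rect g a b c c = RtoC 0.
Proof. unfold Rect, Vs. rewrite !CInt_point. ring. Qed.

Lemma Rect_bound g a b c d M : a <= b -> c <= d -> RectInt g a b c d ->
  (forall w, InR a b c d w -> Cmod (g w) <= M) ->
  Cmod (Rect g a b c d) <= 2 * ((b - a) + (d - c)) * M.
Proof.
  intros Hab Hcd [I1 [I2 [I3 I4]]] HM. unfold Rect, Hs, Vs, InR in *.
  assert (B1 : Cmod (CInt (fun x => g (x, c)) a b) <= (b - a) * M).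
  { apply CInt_bound; auto. intros; apply HM; simpl; lra. }
  assert (B2 : Cmod (CInt (fun x => g (x, d)) a b) <= (b - a) * M).
  { apply CInt_bound; auto. intros; apply HM; simpl; lra. }
  assert (B3 : Cmod (CInt (fun y => g (a, y)) c d) <= (d - c) * M).
  { apply CInt_bound; auto. intros; apply HM; simpl; lra. }
  assert (B4 : Cmod (CInt (fun y => g (b, y)) c d) <= (d - c) * M).
  { apply CInt_bound; auto. intros; apply HM; simpl; lra. }
  set (X1 := CInt (fun x => g (x, c)) a b) in *.
  set (X2 := CInt (fun x => g (x, d)) a b) in *.
  set (X3 := CInt (fun y => g (a, y)) c d) in *.
  set (X4 := CInt (fun y => g (b, y)) c d) in *.
  replace (X1 + Ci * X4 - X2 - Ci * X3)%C with (X1 + Ci * X4 + (- X2) + (- (Ci * X3)))%C by ring.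
  eapply Rle_trans. apply Cmod_triangle.
  eapply Rle_trans. apply Rplus_le_compat_r. apply Cmod_triangle.
  eapply Rle_trans. apply Rplus_le_compat_r. apply Rplus_le_compat_r. apply Cmod_triangle.
  rewrite !Cmod_opp, !Cmod_mult, Cmod_Ci. lra.
Qed.

Lemma Rect_minus g h a b c d : RectInt g a b c d -> RectInt h a b c d ->
  Rect (fun w => g w - h w)%C a b c d = (Rect g a b c d - Rect h a b c d)%C.
Proof.
  intros [I1 [I2 [I3 I4]]] [J1 [J2 [J3 J4]]]. unfold Rect, Hs, Vs.
  cbv beta.
  rewrite (CInt_minus (fun x => g (x, c)) (fun x => h (x, c)) a b I1 J1).
  rewrite (CInt_minus (fun x => g (x, d)) (fun x => h (x, d)) a b I2 J2).
  rewrite (CInt_minus (fun y => g (a, y)) (fun y => h (a, y)) c d I3 J3).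
  rewrite (CInt_minus (fun y => g (b, y)) (fun y => h (b, y)) c d I4 J4). ring.
Qed.


Lemma CC_mult_const g z k : CC g z -> CC (fun w => g w * k)%C z.
Proof.
  intros H eps Heps.
  destruct (H (eps / (Cmod k + 1))) as [d [Hd H']].
  { apply Rdiv_lt_0_compat; auto. pose proof (Cmod_ge_0 k); lra. }
  exists d. split; auto. intros w Hw.
  replace (g w * k - g z * k)%C with ((g w - g z) * k)%C by ring.
  rewrite Cmod_mult. specialize (H' w Hw). pose proof (Cmod_ge_0 k). pose proof (Cmod_ge_0 (g w - g z)).
  apply Rle_lt_trans with ((eps / (Cmod k + 1)) * Cmod k).
  apply Rmult_le_compat_r; lra.
  apply Rlt_le_trans with ((eps / (Cmod k + 1)) * (Cmod k + 1)).
  apply Rmult_lt_compat_l. apply Rdiv_lt_0_compat; lra. lra.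
  right. field. lra.
Qed.

Lemma Hs_FTC g G c a b : a <= b -> (forall x, a <= x <= b -> CD G (x, c) (g (x, c))) ->
  (forall x, a <= x <= b -> CC g (x, c)) -> Hs g c a b = (G (b, c) - G (a, c))%C.
Proof.
  intros Hab H1 H2. unfold Hs.
  apply (CInt_FTC (fun x => G (x, c))).
  - intros x Hx. rewrite Rmin_left, Rmax_right in Hx by lra.
    replace (g (x, c)) with (g (x, c) * 1)%C by ring.
    apply (chain_RD G (fun x => (x, c))). apply H1; auto. apply RD_h.
  - intros x Hx. rewrite Rmin_left, Rmax_right in Hx by lra.
    apply (RC_comp g (fun x => (x, c))). eapply RC_of_RD. apply RD_h. auto.
Qed.

Lemma Vs_FTC g G x c d : c <= d -> (forall y, c <= y <= d -> CD G (x, y) (g (x, y))) ->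
  (forall y, c <= y <= d -> CC g (x, y)) -> (Ci * Vs g x c d = G (x, d) - G (x, c))%C.
Proof.
  intros Hcd H1 H2. unfold Vs.
  rewrite <- CInt_mult. 2: { apply CexI_v; auto. }
  rewrite (CInt_ext _ (fun y => g (x, y) * Ci)%C). 2: { intros; apply Cmult_comm. }
  apply (CInt_FTC (fun y => G (x, y))).
  - intros y Hy. rewrite Rmin_left, Rmax_right in Hy by lra.
    apply (chain_RD G (fun y => (x, y))). apply H1; auto. apply RD_v.
  - intros y Hy. rewrite Rmin_left, Rmax_right in Hy by lra.
    apply (RC_comp (fun w => g w * Ci)%C (fun y => (x, y))). eapply RC_of_RD. apply RD_v.
    apply CC_mult_const. auto.
Qed.

Lemma Rect_FTC g G a b c d : a <= b -> c <= d ->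
  (forall w, InR a b c d w -> CD G w (g w)) -> (forall w, InR a b c d w -> CC g w) ->
  Rect g a b c d = RtoC 0.
Proof.
  intros Hab Hcd H1 H2. unfold InR in *. unfold Rect.
  rewrite (Hs_FTC g G c a b), (Hs_FTC g G d a b); auto; try (intros; simpl; apply H1 || apply H2; simpl; lra).
  rewrite (Vs_FTC g G b c d), (Vs_FTC g G a c d); auto; try (intros; simpl; apply H1 || apply H2; simpl; lra).
  ring.
Qed.

Lemma CD_quad (al be p w : C) :
  CD (fun v => al * v + be * (v - p) * (v - p) * RtoC (/ 2))%C w (al + be * (w - p))%C.
Proof.
  intros eps Heps.
  pose proof (Cmod_ge_0 be).
  exists (eps / (Cmod be + 1)). split. apply Rdiv_lt_0_compat; lra.
  intros v Hv.
  assert (Hh : (RtoC (/ 2) * RtoC 2 = 1)%C).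
  { rewrite <- RtoC_mult. f_equal. field. }
  replace (al * v + be * (v - p) * (v - p) * RtoC (/ 2) - (al * w + be * (w - p) * (w - p) * RtoC (/ 2)) -
     (v - w) * (al + be * (w - p)))%C with
    (be * RtoC (/ 2) * (v - w) * (v - w) + (v - w) * be * (w - p) * (RtoC (/ 2) * RtoC 2 - 1))%C by ring.
  rewrite Hh. replace (RtoC 1 - 1)%C with (RtoC 0) by ring.
  replace ((v - w) * be * (w - p) * RtoC 0)%C with (RtoC 0) by ring. rewrite Cplus_0_r.
  rewrite !Cmod_mult, Cmod_R. rewrite Rabs_pos_eq by lra.
  pose proof (Cmod_ge_0 (v - w)).
  apply Rle_trans with (Cmod be * (eps / (Cmod be + 1)) * Cmod (v - w)).
  { assert (Cmod (v - w) <= eps / (Cmod be + 1)) by lra.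
    assert (0 <= Cmod be * / 2) by lra.
    assert (0 <= Cmod be * / 2 * Cmod (v - w)) by nra.
    nra. }
  apply Rmult_le_compat_r. lra.
  apply Rle_trans with ((Cmod be / (Cmod be + 1)) * eps). right. field. lra.
  assert (Cmod be / (Cmod be + 1) <= 1). { apply Rmult_le_reg_r with (Cmod be + 1). lra. field_simplify; lra. }
  nra.
Qed.

Lemma Rect_affine (al be p : C) a b c d : a <= b -> c <= d ->
  Rect (fun w => al + be * (w - p))%C a b c d = RtoC 0.
Proof.
  intros Hab Hcd.
  apply (Rect_FTC _ (fun v => al * v + be * (v - p) * (v - p) * RtoC (/ 2))%C); auto.
  intros w _. apply CD_quad.
  intros w _. eapply CC_of_CD.
  eapply CD_plus. apply CD_const.
  eapply CD_mult. apply CD_const.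
  apply CD_ext with (fun w => w + (- p))%C. intros; ring.
  eapply CD_plus. apply CD_id. apply CD_const.
Qed.


Record rect := mkR { ra : R; rb : R; rc : R; rd : R }.
Definition RR g q := Rect g (ra q) (rb q) (rc q) (rd q).
Definition InQ q w := InR (ra q) (rb q) (rc q) (rd q) w.
Definition q1 q := mkR (ra q) ((ra q + rb q)/2) (rc q) ((rc q + rd q)/2).
Definition q2 q := mkR ((ra q + rb q)/2) (rb q) (rc q) ((rc q + rd q)/2).
Definition q3 q := mkR (ra q) ((ra q + rb q)/2) ((rc q + rd q)/2) (rd q).
Definition q4 q := mkR ((ra q + rb q)/2) (rb q) ((rc q + rd q)/2) (rd q).

Definition next g q :=
  if Rle_dec (Cmod (RR g q) / 4) (Cmod (RR g (q1 q))) then q1 q else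
  if Rle_dec (Cmod (RR g q) / 4) (Cmod (RR g (q2 q))) then q2 q else
  if Rle_dec (Cmod (RR g q) / 4) (Cmod (RR g (q3 q))) then q3 q else q4 q.

Lemma RR_split g q : ra q <= rb q -> rc q <= rd q -> (forall w, InQ q w -> CC g w) ->
  RR g q = (RR g (q1 q) + RR g (q2 q) + RR g (q3 q) + RR g (q4 q))%C.
Proof.
  destruct q as [a b c d]. unfold RR, InQ, InR, q1, q2, q3, q4; simpl. intros Hab Hcd H.
  set (m := (a + b) / 2). set (n := (c + d) / 2).
  assert (Hm : a <= m <= b) by (unfold m; lra). assert (Hn : c <= n <= d) by (unfold n; lra).
  rewrite (Rect_splitX g a m b c d); try (apply CexI_h; [lra|intros; apply H; simpl; lra]).
  rewrite (Rect_splitY g a m c n d); try (apply CexI_v; [lra|intros; apply H; simpl; lra]).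
  rewrite (Rect_splitY g m b c n d); try (apply CexI_v; [lra|intros; apply H; simpl; lra]).
  ring.
Qed.

Lemma next_bound g q : ra q <= rb q -> rc q <= rd q -> (forall w, InQ q w -> CC g w) ->
  Cmod (RR g q) <= 4 * Cmod (RR g (next g q)).
Proof.
  intros H1 H2 H3. pose proof (RR_split g q H1 H2 H3) as E.
  unfold next. destruct (Rle_dec _ _). lra. destruct (Rle_dec _ _). lra. destruct (Rle_dec _ _). lra.
  rewrite E in *.
  set (A1 := RR g (q1 q)) in *. set (A2 := RR g (q2 q)) in *. set (A3 := RR g (q3 q)) in *. set (A4 := RR g (q4 q)) in *.
  pose proof (Cmod_triangle (A1 + A2 + A3) A4). pose proof (Cmod_triangle (A1 + A2) A3). pose proof (Cmod_triangle A1 A2).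
  lra.
Qed.

Lemma next_props g q : ra q <= rb q -> rc q <= rd q ->
  ra q <= ra (next g q) /\ rb (next g q) <= rb q /\ rb (next g q) - ra (next g q) = (rb q - ra q) / 2 /\
  rc q <= rc (next g q) /\ rd (next g q) <= rd q /\ rd (next g q) - rc (next g q) = (rd q - rc q) / 2.
Proof.
  intros. unfold next, q1, q2, q3, q4.
  destruct (Rle_dec _ _); [simpl; lra|]. destruct (Rle_dec _ _); [simpl; lra|]. destruct (Rle_dec _ _); simpl; lra.
Qed.

Fixpoint sq g q n := match n with O => q | S n => next g (sq g q n) end.

Lemma sq_props g q n : ra q <= rb q -> rc q <= rd q ->
  ra q <= ra (sq g q n) /\ rb (sq g q n) <= rb q /\ rb (sq g q n) - ra (sq g q n) = (rb q - ra q) / 2 ^ n /\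
  rc q <= rc (sq g q n) /\ rd (sq g q n) <= rd q /\ rd (sq g q n) - rc (sq g q n) = (rd q - rc q) / 2 ^ n.
Proof.
  intros H1 H2. induction n as [|n IH]; simpl.
  - rewrite !Rdiv_1_r. lra.
  - assert (P : 0 < 2 ^ n) by (apply pow_lt; lra).
    assert (ra (sq g q n) <= rb (sq g q n)).
    { destruct IH as [_ [_ [E _]]]. assert (0 <= (rb q - ra q) / 2 ^ n) by (apply Rdiv_le_0_compat; lra). lra. }
    assert (rc (sq g q n) <= rd (sq g q n)).
    { destruct IH as [_ [_ [_ [_ [_ E]]]]]. assert (0 <= (rd q - rc q) / 2 ^ n) by (apply Rdiv_le_0_compat; lra). lra. }
    pose proof (next_props g (sq g q n) H H0).
    destruct IH as [I1 [I2 [I3 [I4 [I5 I6]]]]].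
    destruct H3 as [J1 [J2 [J3 [J4 [J5 J6]]]]].
    repeat split; try lra.
    rewrite J3, I3. field. lra.
    rewrite J6, I6. field. lra.
Qed.

Lemma sq_mono g q n m : ra q <= rb q -> rc q <= rd q -> (n <= m)%nat ->
  ra (sq g q n) <= ra (sq g q m) /\ rb (sq g q m) <= rb (sq g q n) /\
  rc (sq g q n) <= rc (sq g q m) /\ rd (sq g q m) <= rd (sq g q n).
Proof.
  intros H1 H2 Hnm. induction Hnm as [|m Hnm IH]. lra.
  simpl.
  destruct (sq_props g q m H1 H2) as [I1 [I2 [I3 [I4 [I5 I6]]]]].
  assert (P : 0 < 2 ^ m) by (apply pow_lt; lra).
  assert (ra (sq g q m) <= rb (sq g q m)).
  { assert (0 <= (rb q - ra q) / 2 ^ m) by (apply Rdiv_le_0_compat; lra). lra. }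
  assert (rc (sq g q m) <= rd (sq g q m)).
  { assert (0 <= (rd q - rc q) / 2 ^ m) by (apply Rdiv_le_0_compat; lra). lra. }
  pose proof (next_props g (sq g q m) H H0). lra.
Qed.

Lemma sq_bound g q n : ra q <= rb q -> rc q <= rd q -> (forall w, InQ q w -> CC g w) ->
  Cmod (RR g q) <= 4 ^ n * Cmod (RR g (sq g q n)).
Proof.
  intros H1 H2 H3. induction n as [|n IH]; simpl. lra.
  destruct (sq_props g q n H1 H2) as [I1 [I2 [I3 [I4 [I5 I6]]]]].
  assert (P : 0 < 2 ^ n) by (apply pow_lt; lra).
  assert (ra (sq g q n) <= rb (sq g q n)).
  { assert (0 <= (rb q - ra q) / 2 ^ n) by (apply Rdiv_le_0_compat; lra). lra. }
  assert (rc (sq g q n) <= rd (sq g q n)).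
  { assert (0 <= (rd q - rc q) / 2 ^ n) by (apply Rdiv_le_0_compat; lra). lra. }
  assert (HB := next_bound g (sq g q n) H H0).
  assert (HB' : Cmod (RR g (sq g q n)) <= 4 * Cmod (RR g (next g (sq g q n)))).
  { apply HB. intros w [Hw1 Hw2]. apply H3. unfold InQ, InR in *. lra. }
  assert (0 < 4 ^ n) by (apply pow_lt; lra).
  nra.
Qed.

Lemma nested_point (an bn : nat -> R) :
  (forall n m, (n <= m)%nat -> an n <= an m /\ bn m <= bn n) -> (forall n, an n <= bn n) ->
  exists p, forall n, an n <= p <= bn n.
Proof.
  intros Hm Hab.
  assert (Hle : forall n m, an n <= bn m).
  { intros n m. destruct (Nat.le_ge_cases n m) as [H|H].
    - destruct (Hm n m H). specialize (Hab m). lra.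
    - destruct (Hm m n H). specialize (Hab n). lra. }
  destruct (completeness (fun x => exists n, x = an n)) as [p [Hp1 Hp2]].
  - exists (bn O). intros x [n ->]. apply Hle.
  - exists (an O). exists O. reflexivity.
  - exists p. intros n. split. apply Hp1. exists n. reflexivity.
    apply Hp2. intros x [k ->]. apply Hle.
Qed.

Lemma INR_le_pow2 n : INR n <= 2 ^ n.
Proof. induction n as [|n IH]. simpl; lra. rewrite S_INR. simpl. assert (1 <= 2 ^ n) by (apply pow_R1_Rle; lra). lra. Qed.


Lemma CC_affine (al be p w : C) : CC (fun w => al + be * (w - p))%C w.
Proof.
  eapply CC_of_CD.
  eapply CD_plus. apply CD_const.
  eapply CD_mult. apply CD_const.
  apply CD_ext with (fun w => w + (- p))%C. intros; ring.
  eapply CD_plus. apply CD_id. apply CD_const.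
Qed.

Lemma Cmod_le_parts (w : C) : Cmod w <= Rabs (fst w) + Rabs (snd w).
Proof. apply Cmod_le_sum. Qed.

Lemma small_zero x K : 0 <= x -> 0 <= K -> (forall eps, 0 < eps -> x <= eps * K) -> x = 0.
Proof.
  intros Hx HK H. destruct (Rle_lt_or_eq_dec 0 x Hx) as [Hp|]; auto.
  specialize (H (x / (2 * (K + 1)))). assert (0 < x / (2 * (K + 1))) by (apply Rdiv_lt_0_compat; lra).
  specialize (H H0). 
  assert (x / (2 * (K + 1)) * K < x).
  { apply Rle_lt_trans with (x / (2 * (K + 1)) * (K + 1)). apply Rmult_le_compat_l; lra.
    replace (x / (2 * (K + 1)) * (K + 1)) with (x / 2) by (field; lra). lra. }
  lra.
Qed.

Lemma goursat g a b c d : a <= b -> c <= d ->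
  (forall w, InR a b c d w -> CC g w) -> (forall w, InR a b c d w -> exists l, CD g w l) ->
  Rect g a b c d = RtoC 0.
Proof.
  intros Hab Hcd Hc Hd.
  set (q := mkR a b c d).
  change (Rect g a b c d) with (RR g q).
  assert (Hq1 : ra q <= rb q) by (simpl; lra). assert (Hq2 : rc q <= rd q) by (simpl; lra).
  assert (HcQ : forall w, InQ q w -> CC g w) by exact Hc.
  destruct (nested_point (fun n => ra (sq g q n)) (fun n => rb (sq g q n))) as [px Hpx].
  { intros n m Hnm. destruct (sq_mono g q n m Hq1 Hq2 Hnm); tauto. }
  { intros n. destruct (sq_props g q n Hq1 Hq2) as [_ [_ [E _]]].
    assert (0 <= (rb q - ra q) / 2 ^ n) by (apply Rdiv_le_0_compat; [lra|apply pow_lt; lra]). lra. }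
  destruct (nested_point (fun n => rc (sq g q n)) (fun n => rd (sq g q n))) as [py Hpy].
  { intros n m Hnm. destruct (sq_mono g q n m Hq1 Hq2 Hnm); tauto. }
  { intros n. destruct (sq_props g q n Hq1 Hq2) as [_ [_ [_ [_ [_ E]]]]].
    assert (0 <= (rd q - rc q) / 2 ^ n) by (apply Rdiv_le_0_compat; [lra|apply pow_lt; lra]). lra. }
  set (p := (px, py) : C).
  assert (Hp : InR a b c d p). { specialize (Hpx O). specialize (Hpy O). simpl in *. unfold InR; simpl. lra. }
  destruct (Hd p Hp) as [l Hl].
  set (W := b - a). set (Hh := d - c).
  apply Cmod_eq_0.
  apply (small_zero _ (2 * (W + Hh) ^ 2)). apply Cmod_ge_0. 
  { apply Rmult_le_pos. lra. apply pow2_ge_0. }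
  intros eps Heps.
  destruct (Hl eps Heps) as [dl [Hdl Hl']].
  destruct (INR_archimed dl (W + Hh)) as [n Hn]; auto.
  assert (P2 : 0 < 2 ^ n) by (apply pow_lt; lra).
  set (S := (W + Hh) / 2 ^ n).
  assert (HS : S < dl).
  { unfold S. apply Rmult_lt_reg_r with (2 ^ n); auto. unfold Rdiv. rewrite Rmult_assoc, Rinv_l by lra.
    pose proof (INR_le_pow2 n). nra. }
  destruct (sq_props g q n Hq1 Hq2) as [I1 [I2 [I3 [I4 [I5 I6]]]]].
  set (qn := sq g q n) in *.
  simpl in I1, I2, I3, I4, I5, I6.
  assert (Hwn : rb qn - ra qn + (rd qn - rc qn) = S).
  { rewrite I3, I6. unfold S, W, Hh. field. lra. }
  assert (HcQn : forall w, InQ qn w -> CC g w).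
  { intros w [Hw1 Hw2]. apply Hc. unfold InR. simpl. lra. }
  assert (Hqn1 : ra qn <= rb qn). { assert (0 <= (b - a) / 2 ^ n) by (apply Rdiv_le_0_compat; lra). lra. }
  assert (Hqn2 : rc qn <= rd qn). { assert (0 <= (d - c) / 2 ^ n) by (apply Rdiv_le_0_compat; lra). lra. }
  assert (Hbound : Cmod (RR g qn) <= 2 * S * (eps * S)).
  { unfold RR.
    assert (RI1 : RectInt g (ra qn) (rb qn) (rc qn) (rd qn)) by (apply RectInt_of_cont; auto).
    assert (RI2 : RectInt (fun w => g p + l * (w - p))%C (ra qn) (rb qn) (rc qn) (rd qn))
      by (apply RectInt_of_cont; auto; intros; apply CC_affine).
    assert (E : Rect g (ra qn) (rb qn) (rc qn) (rd qn) =
       Rect (fun w => g w - (g p + l * (w - p)))%C (ra qn) (rb qn) (rc qn) (rd qn)).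
    { rewrite Rect_minus; auto. rewrite Rect_affine; auto. ring. }
    rewrite E. rewrite <- Hwn.
    apply Rect_bound; auto.
    - apply RectInt_of_cont; auto. intros w Hw.
      intros e He. destruct (HcQn w Hw (e/2)) as [d1 [Hd1 H1]]. lra.
      destruct (CC_affine (g p) l p w (e/2)) as [d2 [Hd2 H2]]. lra.
      exists (Rmin d1 d2). split. apply Rmin_pos; auto. intros v Hv.
      assert (Hv1 : Cmod (v - w) < d1) by (eapply Rlt_le_trans; [exact Hv|apply Rmin_l]).
      assert (Hv2 : Cmod (v - w) < d2) by (eapply Rlt_le_trans; [exact Hv|apply Rmin_r]).
      specialize (H1 v Hv1). specialize (H2 v Hv2).
      replace (g v - (g p + l * (v - p)) - (g w - (g p + l * (w - p))))%C with
        ((g v - g w) + - ((g p + l * (v - p)) - (g p + l * (w - p))))%C by ring.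
      eapply Rle_lt_trans. apply Cmod_triangle. rewrite Cmod_opp. lra.
    - intros w [Hw1 Hw2].
      assert (Hwp : Cmod (w - p) <= S).
      { eapply Rle_trans. apply Cmod_le_parts. simpl.
        specialize (Hpx n). specialize (Hpy n). simpl in Hpx, Hpy. fold qn in Hpx, Hpy.
        rewrite <- Hwn. unfold Rminus at 1 2. 
        assert (Rabs (fst w - px) <= rb qn - ra qn) by (apply Rabs_le; lra).
        assert (Rabs (snd w - py) <= rd qn - rc qn) by (apply Rabs_le; lra).
        simpl. unfold Rminus in *. lra. }
      replace (g w - (g p + l * (w - p)))%C with (g w - g p - (w - p) * l)%C by ring.
      eapply Rle_trans. apply Hl'. lra. apply Rmult_le_compat_l; lra. }
  eapply Rle_trans. apply (sq_bound g q n Hq1 Hq2 HcQ). fold qn.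
  assert (E4 : 4 ^ n = 2 ^ n * 2 ^ n). { rewrite <- Rpow_mult_distr. f_equal; lra. }
  assert (0 < 4 ^ n) by (apply pow_lt; lra).
  apply Rle_trans with (4 ^ n * (2 * S * (eps * S))). apply Rmult_le_compat_l; lra.
  right. rewrite E4. unfold S. field. lra.
Qed.


Lemma rect_away g z a b c d : a <= b -> c <= d ->
  (forall w, InR a b c d w -> CC g w) -> (forall w, InR a b c d w -> w <> z -> exists l, CD g w l) ->
  (forall w, InR a b c d w -> w <> z) -> Rect g a b c d = RtoC 0.
Proof. intros. apply goursat; auto. Qed.

Lemma goursat_exc g z a b c d : a <= b -> c <= d ->
  (forall w, InR a b c d w -> CC g w) -> (forall w, InR a b c d w -> w <> z -> exists l, CD g w l) ->
  Rect g a b c d = RtoC 0.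
Proof.
  intros Hab Hcd Hc Hd.
  destruct (classic (InR a b c d z)) as [Hz|Hz].
  2: { apply goursat; auto. intros w Hw. apply Hd; auto. intros E; subst; auto. }
  destruct z as [zx zy]. unfold InR in Hz; simpl in Hz.
  destruct (Hc (zx, zy) Hz 1 Rlt_0_1) as [d0 [Hd0 H0]].
  set (M := Cmod (g (zx, zy)) + 1).
  assert (HM : forall w, Cmod (w - (zx, zy)) < d0 -> Cmod (g w) <= M).
  { intros w Hw. specialize (H0 w Hw). unfold M.
    replace (g w) with ((g w - g (zx, zy)) + g (zx, zy))%C by ring.
    eapply Rle_trans. apply Cmod_triangle. lra. }
  assert (HM0 : 0 <= M) by (unfold M; pose proof (Cmod_ge_0 (g (zx, zy))); lra).
  apply Cmod_eq_0. apply (small_zero _ (8 * M)). apply Cmod_ge_0. lra.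
  intros eps Heps.
  set (s := Rmin eps (d0 / 4)).
  assert (Hs : 0 < s) by (apply Rmin_pos; lra).
  assert (Hs1 : s <= eps) by apply Rmin_l. assert (Hs2 : s <= d0 / 4) by apply Rmin_r.
  set (x1 := Rmax a (zx - s)). set (x2 := Rmin b (zx + s)).
  set (y1 := Rmax c (zy - s)). set (y2 := Rmin d (zy + s)).
  assert (Hx1 : a <= x1 <= zx) by (unfold x1; split; [apply Rmax_l|apply Rmax_lub; lra]).
  assert (Hx2 : zx <= x2 <= b) by (unfold x2; split; [apply Rmin_glb; lra|apply Rmin_l]).
  assert (Hy1 : c <= y1 <= zy) by (unfold y1; split; [apply Rmax_l|apply Rmax_lub; lra]).
  assert (Hy2 : zy <= y2 <= d) by (unfold y2; split; [apply Rmin_glb; lra|apply Rmin_l]).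
  assert (Hx1' : zx - s <= x1) by apply Rmax_r. assert (Hx2' : x2 <= zx + s) by apply Rmin_r.
  assert (Hy1' : zy - s <= y1) by apply Rmax_r. assert (Hy2' : y2 <= zy + s) by apply Rmin_r.
  assert (CI : forall a' b' c' d', a <= a' -> a' <= b' -> b' <= b -> c <= c' -> c' <= d' -> d' <= d ->
     RectInt g a' b' c' d').
  { intros. apply RectInt_of_cont; try lra. intros w [Hw1 Hw2]. apply Hc. unfold InR; lra. }
  assert (Hsub : forall a' b' c' d', a <= a' -> a' <= b' -> b' <= b -> c <= c' -> c' <= d' -> d' <= d ->
     (forall w, InR a' b' c' d' w -> w <> (zx, zy)) -> Rect g a' b' c' d' = RtoC 0).
  { intros. apply (rect_away g (zx, zy)); try lra; auto.
    intros w [Hw1 Hw2]. apply Hc. unfold InR; lra.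
    intros w [Hw1 Hw2]. apply Hd. unfold InR; lra. }
  assert (E1 : Rect g a b c d = (Rect g a x1 c d + Rect g x1 x2 c d + Rect g x2 b c d)%C).
  { destruct (CI a x1 c d) as [A1 [A2 _]]; try lra.
    destruct (CI x1 b c d) as [B1 [B2 _]]; try lra.
    destruct (CI x1 x2 c d) as [C1 [C2 _]]; try lra.
    destruct (CI x2 b c d) as [D1 [D2 _]]; try lra.
    rewrite (Rect_splitX g a x1 b c d); auto. rewrite (Rect_splitX g x1 x2 b c d); auto. ring. }
  assert (E2 : Rect g x1 x2 c d = (Rect g x1 x2 c y1 + Rect g x1 x2 y1 y2 + Rect g x1 x2 y2 d)%C).
  { destruct (CI x1 x2 c y1) as [_ [_ [A1 A2]]]; try lra.
    destruct (CI x1 x2 y1 d) as [_ [_ [B1 B2]]]; try lra.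
    destruct (CI x1 x2 y1 y2) as [_ [_ [C1 C2]]]; try lra.
    destruct (CI x1 x2 y2 d) as [_ [_ [D1 D2]]]; try lra.
    rewrite (Rect_splitY g x1 x2 c y1 d); auto. rewrite (Rect_splitY g x1 x2 y1 y2 d); auto. ring. }
  assert (Z1 : Rect g a x1 c d = RtoC 0).
  { destruct (Req_dec x1 a) as [Ea|Ea]. rewrite Ea. apply Rect_degX.
    apply Hsub; try lra. intros w [Hw1 Hw2] E. subst w. simpl in *.
    unfold x1 in *. destruct (Rmax_Rle a (zx - s) x1) as [_ HH]. unfold Rmax in Ea, Hw1.
    destruct (Rle_dec a (zx - s)); lra. }
  assert (Z2 : Rect g x2 b c d = RtoC 0).
  { destruct (Req_dec x2 b) as [Eb|Eb]. rewrite Eb. apply Rect_degX.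
    apply Hsub; try lra. intros w [Hw1 Hw2] E. subst w. simpl in *.
    unfold x2 in *. unfold Rmin in Eb, Hw1.
    destruct (Rle_dec b (zx + s)); lra. }
  assert (Z3 : Rect g x1 x2 c y1 = RtoC 0).
  { destruct (Req_dec y1 c) as [Ec|Ec]. rewrite Ec. apply Rect_degY.
    apply Hsub; try lra. intros w [Hw1 Hw2] E. subst w. simpl in *.
    unfold y1 in *. unfold Rmax in Ec, Hw2.
    destruct (Rle_dec c (zy - s)); lra. }
  assert (Z4 : Rect g x1 x2 y2 d = RtoC 0).
  { destruct (Req_dec y2 d) as [Ed|Ed]. rewrite Ed. apply Rect_degY.
    apply Hsub; try lra. intros w [Hw1 Hw2] E. subst w. simpl in *.
    unfold y2 in *. unfold Rmin in Ed, Hw2.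
    destruct (Rle_dec d (zy + s)); lra. }
  rewrite E1, E2, Z1, Z2, Z3, Z4.
  replace (RtoC 0 + (RtoC 0 + Rect g x1 x2 y1 y2 + RtoC 0) + RtoC 0)%C with (Rect g x1 x2 y1 y2) by ring.
  eapply Rle_trans. apply (Rect_bound g x1 x2 y1 y2 M); try lra. apply CI; lra.
  intros w [Hw1 Hw2]. apply HM.
  eapply Rle_lt_trans. apply Cmod_le_parts. simpl.
  assert (Rabs (fst w - zx) <= s) by (apply Rabs_le; lra).
  assert (Rabs (snd w - zy) <= s) by (apply Rabs_le; lra).
  unfold Rminus in *. lra.
  assert (0 <= M * (eps - s)) by (apply Rmult_le_pos; lra).
  nra.
Qed.


Lemma Rect_swapX g a b c d : CexI (fun x => g (x, c)) a b -> CexI (fun x => g (x, d)) a b ->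
  Rect g b a c d = (- Rect g a b c d)%C.
Proof. intros H1 H2. unfold Rect, Hs. rewrite (CInt_swap _ a b H1), (CInt_swap _ a b H2). ring. Qed.

Lemma Rect_swapY g a b c d : CexI (fun y => g (a, y)) c d -> CexI (fun y => g (b, y)) c d ->
  Rect g a b d c = (- Rect g a b c d)%C.
Proof. intros H1 H2. unfold Rect, Vs. rewrite (CInt_swap _ c d H1), (CInt_swap _ c d H2). ring. Qed.

Lemma CexI_h_gen g c a b : (forall x, Rmin a b <= x <= Rmax a b -> CC g (x, c)) -> CexI (fun x => g (x, c)) a b.
Proof. intros H. apply CexI_cont. intros x Hx.
  apply (RC_comp g (fun x => (x, c))). eapply RC_of_RD. apply RD_h. auto. Qed.
Lemma CexI_v_gen g x c d : (forall y, Rmin c d <= y <= Rmax c d -> CC g (x, y)) -> CexI (fun y => g (x, y)) c d.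
Proof. intros H. apply CexI_cont. intros y Hy.
  apply (RC_comp g (fun y => (x, y))). eapply RC_of_RD. apply RD_v. auto. Qed.

Lemma rect_zero_gen g (P : C -> Prop) :
  (forall w, P w -> CC g w) ->
  (forall a b c d, a <= b -> c <= d -> (forall w, InR a b c d w -> P w) -> Rect g a b c d = RtoC 0) ->
  forall a b c d, (forall w, InR (Rmin a b) (Rmax a b) (Rmin c d) (Rmax c d) w -> P w) -> Rect g a b c d = RtoC 0.
Proof.
  intros Hc HR a b c d HP.
  assert (Hx : forall y, Rmin c d <= y <= Rmax c d -> CexI (fun x => g (x, y)) a b).
  { intros y Hy. apply CexI_h_gen. intros x Hx0. apply Hc, HP. unfold InR; simpl; lra. }
  assert (Hy : forall x, Rmin a b <= x <= Rmax a b -> CexI (fun y => g (x, y)) c d).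
  { intros x Hx0. apply CexI_v_gen. intros y Hy0. apply Hc, HP. unfold InR; simpl; lra. }
  assert (Hmc := Rmin_l c d). assert (Hmd := Rmin_r c d). assert (HMc := Rmax_l c d). assert (HMd := Rmax_r c d).
  assert (Hma := Rmin_l a b). assert (Hmb := Rmin_r a b). assert (HMa := Rmax_l a b). assert (HMb := Rmax_r a b).
  assert (Hcd : forall a' b', a' <= b' -> Rmin a b = a' -> Rmax a b = b' -> Rect g a' b' c d = RtoC 0).
  { intros a' b' Hab' E1 E2. destruct (Rle_dec c d) as [Hcd|Hcd].
    - apply HR; auto. intros w Hw. apply HP. rewrite E1, E2, Rmin_left, Rmax_right by lra. auto.
    - rewrite (Rect_swapY g a' b' d c). 2,3: apply ex_RInt_swap, Hy; lra.
      rewrite HR; try lra. ring.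
      intros w Hw. apply HP. rewrite E1, E2, Rmin_right, Rmax_left by lra. auto. }
  destruct (Rle_dec a b) as [Hab|Hab].
  - apply Hcd; auto. apply Rmin_left; auto. apply Rmax_right; auto.
  - rewrite (Rect_swapX g b a c d). 2,3: apply ex_RInt_swap, Hx; lra.
    rewrite Hcd; try lra. ring. apply Rmin_right; lra. apply Rmax_left; lra.
Qed.


Lemma CInt_const k a b : CInt (fun _ => k) a b = (RtoC (b - a) * k)%C.
Proof. apply CInt_unique. rewrite <- scalCR. apply (@is_RInt_const C_R_NormedModule). Qed.

Lemma CInt_bound_gen f a b M : (forall x, Rmin a b <= x <= Rmax a b -> Cmod (f x) <= M) -> CexI f a b ->
  Cmod (CInt f a b) <= Rabs (b - a) * M.
Proof.
  intros HM Hex. destruct (Rle_dec a b) as [Hab|Hab].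
  - rewrite Rabs_pos_eq by lra. apply CInt_bound; auto. intros x Hx. apply HM.
    rewrite Rmin_left, Rmax_right by lra. auto.
  - rewrite CInt_swap; auto. rewrite Cmod_opp. rewrite Rabs_left by lra.
    replace (- (b - a)) with (a - b) by ring.
    apply CInt_bound; try lra. intros x Hx. apply HM. rewrite Rmin_right, Rmax_left by lra. auto.
    apply ex_RInt_swap; auto. apply ex_RInt_swap; auto.
Qed.

Lemma Cmod_box u v x y e1 e2 : Rabs u <= Rabs x + e1 -> Rabs v <= Rabs y + e2 -> 0 <= e1 -> 0 <= e2 ->
  Cmod (u, v) <= Cmod (x, y) + e1 + e2.
Proof.
  intros H1 H2 He1 He2.
  assert (Hx := re_le_Cmod (x, y)). assert (Hy := Rmax_Cmod (x, y)). simpl in Hx, Hy.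
  assert (Hy' : Rabs y <= Cmod (x, y)) by (eapply Rle_trans; [apply Rmax_r|exact Hy]).
  set (m := Cmod (x, y)) in *.
  assert (Hm : 0 <= m) by (unfold m; apply Cmod_ge_0).
  assert (Hm2 : m * m = x * x + y * y).
  { unfold m, Cmod. simpl. rewrite sqrt_sqrt. ring. nra. }
  unfold Cmod. simpl.
  rewrite <- (sqrt_square (m + e1 + e2)) by lra.
  apply sqrt_le_1_alt.
  assert (Hu : u * (u * 1) = Rabs u * Rabs u) by (rewrite <- Rabs_mult, Rabs_pos_eq by nra; ring).
  assert (Hv : v * (v * 1) = Rabs v * Rabs v) by (rewrite <- Rabs_mult, Rabs_pos_eq by nra; ring).
  rewrite Hu, Hv.
  assert (Hx2 : x * x = Rabs x * Rabs x) by (rewrite <- Rabs_mult, Rabs_pos_eq by nra; ring).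
  assert (Hy2 : y * y = Rabs y * Rabs y) by (rewrite <- Rabs_mult, Rabs_pos_eq by nra; ring).
  pose proof (Rabs_pos u). pose proof (Rabs_pos v). pose proof (Rabs_pos x). pose proof (Rabs_pos y).
  assert (Rabs u * Rabs u <= (Rabs x + e1) * (Rabs x + e1)) by nra.
  assert (Rabs v * Rabs v <= (Rabs y + e2) * (Rabs y + e2)) by nra.
  nra.
Qed.

Definition Prim (g : C -> C) (w : C) : C := (Hs g 0 0 (fst w) + Ci * Vs g (fst w) 0 (snd w))%C.

Lemma Prim_CD g rho1 : (forall w, Cmod w < rho1 -> CC g w) ->
  (forall a b c d, a <= b -> c <= d -> (forall w, InR a b c d w -> Cmod w < rho1) -> Rect g a b c d = RtoC 0) ->
  forall w, Cmod w < rho1 -> CD (Prim g) w (g w).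
Proof.
  intros Hc HR w Hw eps Heps. destruct w as [x y].
  set (eta := rho1 - Cmod (x, y)).
  destruct (Hc (x, y) Hw (eps / 2)) as [dl [Hdl Hg]]. lra.
  exists (Rmin (eta / 2) (dl / 2)). split. apply Rmin_pos; unfold eta; lra.
  intros [x' y'] Hv.
  assert (Hv1 : Cmod ((x', y') - (x, y)) < eta / 2) by (eapply Rlt_le_trans; [exact Hv|apply Rmin_l]).
  assert (Hv2 : Cmod ((x', y') - (x, y)) < dl / 2) by (eapply Rlt_le_trans; [exact Hv|apply Rmin_r]).
  set (h := ((x', y') - (x, y))%C) in *.
  assert (Hh := Rmax_Cmod h). unfold h in Hh. simpl in Hh.
  set (s := x' - x). set (t := y' - y).
  assert (Hs' : Rabs s <= Cmod h) by (unfold s, h; eapply Rle_trans; [|exact Hh]; unfold Rminus; apply Rmax_l).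
  assert (Ht' : Rabs t <= Cmod h) by (unfold t, h; eapply Rle_trans; [|exact Hh]; unfold Rminus; apply Rmax_r).
  assert (Hdisk : forall u v, Rabs u <= Rabs x + Rabs s -> Rabs v <= Rabs y + Rabs t -> Cmod (u, v) < rho1).
  { intros u v Hu Hv'. eapply Rle_lt_trans. apply (Cmod_box u v x y (Rabs s) (Rabs t)); auto; apply Rabs_pos.
    unfold eta in Hv1. lra. }
  assert (Hbetw : forall u a b, Rmin a b <= u <= Rmax a b -> Rabs u <= Rmax (Rabs a) (Rabs b)).
  { intros u a b Hu. unfold Rmin, Rmax in *. destruct (Rle_dec a b);
    apply Rabs_le; destruct (Rle_dec (Rabs a) (Rabs b)); unfold Rabs in *;
    repeat destruct Rcase_abs; lra. }
  assert (Hxs : Rabs x' <= Rabs x + Rabs s) by (replace x' with (x + s) by (unfold s; ring); apply Rabs_triang).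
  assert (Hyt : Rabs y' <= Rabs y + Rabs t) by (replace y' with (y + t) by (unfold t; ring); apply Rabs_triang).
  assert (Hs0 := Rabs_pos s). assert (Ht0 := Rabs_pos t). assert (Hx0 := Rabs_pos x). assert (Hy0 := Rabs_pos y).
  assert (HcI : forall u v, Rabs u <= Rabs x + Rabs s -> Rabs v <= Rabs y + Rabs t -> CC g (u, v)).
  { intros. apply Hc, Hdisk; auto. }
  assert (I1 : CexI (fun u => g (u, 0)) 0 x).
  { apply CexI_h_gen. intros u Hu. apply HcI. apply Hbetw in Hu. rewrite Rabs_R0 in Hu.
    assert (Rmax 0 (Rabs x) = Rabs x) by (apply Rmax_right, Rabs_pos). lra. rewrite Rabs_R0. lra. }
  assert (I2 : CexI (fun u => g (u, 0)) x x').
  { apply CexI_h_gen. intros u Hu. apply HcI. apply Hbetw in Hu.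
    unfold Rmax in Hu. destruct (Rle_dec (Rabs x) (Rabs x')); lra. rewrite Rabs_R0. lra. }
  assert (I3 : CexI (fun v => g (x', v)) 0 y).
  { apply CexI_v_gen. intros v Hv'. apply HcI. lra. apply Hbetw in Hv'. rewrite Rabs_R0 in Hv'.
    assert (Rmax 0 (Rabs y) = Rabs y) by (apply Rmax_right, Rabs_pos). lra. }
  assert (I4 : CexI (fun v => g (x', v)) y y').
  { apply CexI_v_gen. intros v Hv'. apply HcI. lra. apply Hbetw in Hv'.
    unfold Rmax in Hv'. destruct (Rle_dec (Rabs y) (Rabs y')); lra. }
  assert (I5 : CexI (fun u => g (u, y)) x x').
  { apply CexI_h_gen. intros u Hu. apply HcI. apply Hbetw in Hu.
    unfold Rmax in Hu. destruct (Rle_dec (Rabs x) (Rabs x')); lra. lra. }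
  assert (E1 : Hs g 0 0 x' = (Hs g 0 0 x + Hs g 0 x x')%C).
  { unfold Hs. symmetry. apply CInt_Chasles; auto. }
  assert (E2 : Rect g x x' 0 y = RtoC 0).
  { apply (rect_zero_gen g (fun w => Cmod w < rho1)); auto.
    intros [u v] [Hu Hv']. simpl in Hu, Hv'. apply Hdisk.
    apply Hbetw in Hu. unfold Rmax in Hu. destruct (Rle_dec (Rabs x) (Rabs x')); lra.
    apply Hbetw in Hv'. rewrite Rabs_R0 in Hv'.
    assert (Rmax 0 (Rabs y) = Rabs y) by (apply Rmax_right, Rabs_pos). lra. }
  assert (E3 : Vs g x' 0 y' = (Vs g x' 0 y + Vs g x' y y')%C).
  { unfold Vs. symmetry. apply CInt_Chasles; auto. }
  unfold Rect in E2.
  assert (Eh : h = (RtoC s + Ci * RtoC t)%C).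
  { unfold h, s, t, Cminus, Cplus, Copp, Cmult, RtoC, Ci. simpl. f_equal; ring. }
  assert (EM : (Prim g (x', y') - Prim g (x, y) - h * g (x, y) =
     (Hs g y x x' - RtoC s * g (x, y)) + Ci * (Vs g x' y y' - RtoC t * g (x, y)))%C).
  { unfold Prim; simpl. rewrite E1, E3, Eh.
    replace (Hs g 0 0 x + Hs g 0 x x' + Ci * (Vs g x' 0 y + Vs g x' y y') -
      (Hs g 0 0 x + Ci * Vs g x 0 y) - (RtoC s + Ci * RtoC t) * g (x, y))%C with
      ((Hs g 0 x x' + Ci * Vs g x' 0 y - Hs g y x x' - Ci * Vs g x 0 y) +
       ((Hs g y x x' - RtoC s * g (x, y)) + Ci * (Vs g x' y y' - RtoC t * g (x, y))))%C by ring.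
    rewrite E2. ring. }
  rewrite EM.
  assert (B1 : Cmod (Hs g y x x' - RtoC s * g (x, y)) <= Rabs s * (eps / 2)).
  { unfold Hs. replace (RtoC s * g (x, y))%C with (CInt (fun _ => g (x, y)) x x') by (rewrite CInt_const; reflexivity).
    rewrite <- CInt_minus; auto. 2: { apply CexI_cont. intros; intros e He. exists 1. split. lra. intros.
      replace (g (x, y) - g (x, y))%C with (RtoC 0) by ring. rewrite Cmod_0. auto. }
    apply CInt_bound_gen. 2: { apply CexI_ext with (fun u => g (u, y) - g (x, y))%C. auto.
       apply CexI_cont. intros u Hu. apply (RC_comp (fun w => g w - g (x, y))%C (fun u => (u, y))).
       eapply RC_of_RD. apply RD_h. 
       intros e He. assert (Hcu : CC g (u, y)). { apply HcI.
       apply Hbetw in Hu. unfold Rmax in Hu. destruct (Rle_dec (Rabs x) (Rabs x')); lra. lra. }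
       destruct (Hcu e He) as [dd [Hdd Hgg]].
       exists dd. split; auto. intros w' Hw'. replace (g w' - g (x, y) - (g (u, y) - g (x, y)))%C with (g w' - g (u, y))%C by ring. auto. }
    intros u Hu. left. apply Hg. rewrite path_h. rewrite Cmod_R.
    assert (Rabs (u - x) <= Rabs s). { unfold s; unfold Rmin, Rmax in Hu; destruct (Rle_dec x x'); unfold Rabs; repeat destruct Rcase_abs; lra. }
    lra. }
  assert (B2 : Cmod (Vs g x' y y' - RtoC t * g (x, y)) <= Rabs t * (eps / 2)).
  { unfold Vs. replace (RtoC t * g (x, y))%C with (CInt (fun _ => g (x, y)) y y') by (rewrite CInt_const; reflexivity).
    rewrite <- CInt_minus; auto. 2: { apply CexI_cont. intros; intros e He. exists 1. split. lra. intros.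
      replace (g (x, y) - g (x, y))%C with (RtoC 0) by ring. rewrite Cmod_0. auto. }
    apply CInt_bound_gen. 2: { apply CexI_ext with (fun v => g (x', v) - g (x, y))%C. auto.
       apply CexI_cont. intros v Hv'. apply (RC_comp (fun w => g w - g (x, y))%C (fun v => (x', v))).
       eapply RC_of_RD. apply RD_v. 
       intros e He. assert (Hcu : CC g (x', v)). { apply HcI. lra.
       apply Hbetw in Hv'. unfold Rmax in Hv'. destruct (Rle_dec (Rabs y) (Rabs y')); lra. }
       destruct (Hcu e He) as [dd [Hdd Hgg]].
       exists dd. split; auto. intros w' Hw'. replace (g w' - g (x, y) - (g (x', v) - g (x, y)))%C with (g w' - g (x', v))%C by ring. auto. }
    intros v Hv'. left. apply Hg.
    eapply Rle_lt_trans. apply Cmod_le_parts. simpl.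
    assert (Rabs (x' + - x) <= Rabs s) by (unfold s; right; reflexivity).
    assert (Rabs (v + - y) <= Rabs t).
    { unfold Rmin, Rmax in Hv'. unfold t. destruct (Rle_dec y y'); apply Rabs_le; unfold Rabs; repeat destruct Rcase_abs; lra. }
    lra. }
  eapply Rle_trans. apply Cmod_triangle. rewrite Cmod_mult, Cmod_Ci.
  assert (Rabs s * (eps/2) + Rabs t * (eps/2) <= eps * Cmod h) by nra.
  lra.
Qed.


Lemma RDR_of_dpl f t d : derivable_pt_lim f t d -> forall eps, 0 < eps -> exists delta, 0 < delta /\
  forall s, Rabs (s - t) < delta -> Rabs (f s - f t - (s - t) * d) <= eps * Rabs (s - t).
Proof.
  intros H eps Heps. destruct (H eps Heps) as [dl Hdl]. exists dl. split. apply cond_pos.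
  intros s Hs. destruct (Req_dec s t) as [E|E].
  - subst. replace (t - t) with 0 by ring. rewrite Rabs_R0. replace (f t - f t - 0 * d) with 0 by ring. rewrite Rabs_R0. lra.
  - specialize (Hdl (s - t)). replace (t + (s - t)) with s in Hdl by ring.
    assert (Hst : s - t <> 0) by lra.
    specialize (Hdl Hst Hs).
    replace (f s - f t - (s - t) * d) with ((s - t) * ((f s - f t) / (s - t) - d)) by (field; auto).
    rewrite Rabs_mult. rewrite Rmult_comm. apply Rmult_le_compat_r. apply Rabs_pos. lra.
Qed.

Lemma RD_pair f1 f2 t d1 d2 : derivable_pt_lim f1 t d1 -> derivable_pt_lim f2 t d2 ->
  RD (fun s => (f1 s, f2 s)) t (d1, d2).
Proof.
  intros H1 H2 eps Heps.
  destruct (RDR_of_dpl f1 t d1 H1 (eps / 2)) as [e1 [He1 K1]]. lra.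
  destruct (RDR_of_dpl f2 t d2 H2 (eps / 2)) as [e2 [He2 K2]]. lra.
  exists (Rmin e1 e2). split. apply Rmin_pos; auto. intros s Hs.
  assert (Hs1 : Rabs (s - t) < e1) by (eapply Rlt_le_trans; [exact Hs|apply Rmin_l]).
  assert (Hs2 : Rabs (s - t) < e2) by (eapply Rlt_le_trans; [exact Hs|apply Rmin_r]).
  specialize (K1 s Hs1). specialize (K2 s Hs2).
  eapply Rle_trans. apply Cmod_le_parts. simpl.
  replace (f1 s + - f1 t + - ((s - t) * d1 - 0 * d2)) with (f1 s - f1 t - (s - t) * d1) by ring.
  replace (f2 s + - f2 t + - ((s - t) * d2 + 0 * d1)) with (f2 s - f2 t - (s - t) * d2) by ring.
  lra.
Qed.

Definition ei (t : R) : C := (cos t, sin t).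
Definition gam (rho t : R) : C := (RtoC rho * ei t)%C.

Lemma Cmod_ei t : Cmod (ei t) = 1.
Proof. unfold Cmod, ei. simpl. pose proof (sin2_cos2 t). unfold Rsqr in H.
  replace (cos t * (cos t * 1) + sin t * (sin t * 1)) with 1 by lra. apply sqrt_1. Qed.

Lemma Cmod_gam rho t : 0 <= rho -> Cmod (gam rho t) = rho.
Proof. intros. unfold gam. rewrite Cmod_mult, Cmod_ei, Cmod_R, Rabs_pos_eq; lra. Qed.

Lemma RD_scal k g t l : RD g t l -> RD (fun s => k * g s)%C t (k * l)%C.
Proof.
  intros H eps Heps. destruct (H (eps / (Cmod k + 1))) as [d [Hd H']].
  apply Rdiv_lt_0_compat; auto. pose proof (Cmod_ge_0 k); lra.
  exists d. split; auto. intros s Hs.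
  replace (k * g s - k * g t - RtoC (s - t) * (k * l))%C with (k * (g s - g t - RtoC (s - t) * l))%C by ring.
  rewrite Cmod_mult. specialize (H' s Hs). pose proof (Cmod_ge_0 k). pose proof (Rabs_pos (s - t)).
  pose proof (Cmod_ge_0 (g s - g t - RtoC (s - t) * l)).
  apply Rle_trans with (Cmod k * (eps / (Cmod k + 1) * Rabs (s - t))). apply Rmult_le_compat_l; lra.
  apply Rle_trans with ((Cmod k / (Cmod k + 1)) * eps * Rabs (s - t)). right. field. lra.
  apply Rmult_le_compat_r; auto.
  assert (Cmod k / (Cmod k + 1) <= 1). { apply Rmult_le_reg_r with (Cmod k + 1). lra. field_simplify; lra. }
  nra.
Qed.

Lemma RD_ei t : RD ei t (Ci * ei t)%C.
Proof.
  replace (Ci * ei t)%C with (- sin t, cos t).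
  apply RD_pair. apply derivable_pt_lim_cos. apply derivable_pt_lim_sin.
  unfold Ci, ei, Cmult. simpl. f_equal; ring.
Qed.

Lemma RD_gam rho t : RD (gam rho) t (Ci * gam rho t)%C.
Proof.
  unfold gam. replace (Ci * (RtoC rho * ei t))%C with (RtoC rho * (Ci * ei t))%C by ring.
  apply RD_scal. apply RD_ei.
Qed.

Lemma gam_2PI rho : gam rho (2 * PI) = gam rho 0.
Proof. unfold gam, ei. rewrite cos_2PI, sin_2PI, cos_0, sin_0. reflexivity. Qed.

Lemma CC_mult f g z : CC f z -> CC g z -> CC (fun w => f w * g w)%C z.
Proof.
  intros Hf Hg eps Heps.
  pose proof (Cmod_ge_0 (f z)) as Pf. pose proof (Cmod_ge_0 (g z)) as Pg.
  destruct (Hg 1 Rlt_0_1) as [d0 [Hd0 H0]].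
  destruct (Hf (eps / (2 * (Cmod (g z) + 1)))) as [d1 [Hd1 H1]]. apply Rdiv_lt_0_compat; lra.
  destruct (Hg (eps / (2 * (Cmod (f z) + 1)))) as [d2 [Hd2 H2]]. apply Rdiv_lt_0_compat; lra.
  exists (Rmin d0 (Rmin d1 d2)). split. repeat apply Rmin_pos; auto.
  intros w Hw.
  assert (Hw0 : Cmod (w - z) < d0) by (eapply Rlt_le_trans; [exact Hw|apply Rmin_l]).
  assert (Hw1 : Cmod (w - z) < d1) by (eapply Rlt_le_trans; [exact Hw|eapply Rle_trans; [apply Rmin_r|apply Rmin_l]]).
  assert (Hw2 : Cmod (w - z) < d2) by (eapply Rlt_le_trans; [exact Hw|eapply Rle_trans; [apply Rmin_r|apply Rmin_r]]).
  specialize (H0 w Hw0). specialize (H1 w Hw1). specialize (H2 w Hw2).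
  assert (Hgw : Cmod (g w) <= Cmod (g z) + 1).
  { replace (g w) with ((g w - g z) + g z)%C by ring. eapply Rle_trans. apply Cmod_triangle. lra. }
  replace (f w * g w - f z * g z)%C with ((f w - f z) * g w + f z * (g w - g z))%C by ring.
  eapply Rle_lt_trans. apply Cmod_triangle. rewrite !Cmod_mult.
  pose proof (Cmod_ge_0 (f w - f z)). pose proof (Cmod_ge_0 (g w - g z)). pose proof (Cmod_ge_0 (g w)).
  assert (A1 : Cmod (f w - f z) * Cmod (g w) <= eps / 2 * (Cmod (g z) + 1) / (Cmod (g z) + 1)).
  { apply Rle_trans with (eps / (2 * (Cmod (g z) + 1)) * (Cmod (g z) + 1)).
    apply Rmult_le_compat; lra. right. field. lra. }
  assert (A2 : Cmod (f z) * Cmod (g w - g z) < eps / 2).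
  { apply Rle_lt_trans with (Cmod (f z) * (eps / (2 * (Cmod (f z) + 1)))).
    apply Rmult_le_compat_l; lra.
    apply Rle_lt_trans with ((Cmod (f z) / (Cmod (f z) + 1)) * (eps / 2)). right. field. lra.
    assert (Cmod (f z) / (Cmod (f z) + 1) < 1). { apply Rmult_lt_reg_r with (Cmod (f z) + 1). lra. field_simplify; lra. }
    nra. }
  replace (eps / 2 * (Cmod (g z) + 1) / (Cmod (g z) + 1)) with (eps / 2) in A1 by (field; lra).
  lra.
Qed.

Definition CircI (rho : R) (g : C -> C) : C := CInt (fun t => g (gam rho t) * (Ci * gam rho t))%C 0 (2 * PI).

Lemma cauchy_circle g rho rho1 : 0 < rho < rho1 -> (forall w, Cmod w < rho1 -> CC g w) ->
  (forall a b c d, a <= b -> c <= d -> (forall w, InR a b c d w -> Cmod w < rho1) -> Rect g a b c d = RtoC 0) ->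
  CircI rho g = RtoC 0.
Proof.
  intros Hr Hc HR. unfold CircI.
  rewrite (CInt_FTC (fun t => Prim g (gam rho t))).
  - rewrite gam_2PI. ring.
  - intros t _. apply (chain_RD (Prim g) (gam rho)). apply (Prim_CD g rho1); auto.
    rewrite Cmod_gam; lra. apply RD_gam.
  - intros t _. apply (RC_comp (fun w => g w * (Ci * w))%C (gam rho)). eapply RC_of_RD. apply RD_gam.
    apply CC_mult. apply Hc. rewrite Cmod_gam; lra.
    eapply CC_of_CD. eapply CD_mult. apply CD_const. apply CD_id.
Qed.


Lemma C_neq0_of_Cmod (w : C) : 0 < Cmod w -> w <> RtoC 0.
Proof. intros H E. rewrite E, Cmod_0 in H. lra. Qed.

Lemma Ci_div (X Y : R) : X <> 0 -> (Ci / (X, Y))%C = (Y / (X ^ 2 + Y ^ 2), X / (X ^ 2 + Y ^ 2)).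
Proof.
  intros HX. assert (X ^ 2 + Y ^ 2 <> 0) by (assert (0 < X ^ 2) by (apply pow2_gt_0; auto); nra).
  unfold Cdiv, Cinv, Cmult, Ci. simpl. f_equal; field; nra.
Qed.

Lemma J_integral (rho : R) (z : C) : 0 < rho -> Cmod z < rho ->
  CInt (fun t => Ci * gam rho t / (gam rho t - z))%C 0 (2 * PI) = (RtoC (2 * PI) * Ci)%C.
Proof.
  intros Hr Hz.
  set (al := fst z / rho). set (be := snd z / rho).
  assert (Hab : al ^ 2 + be ^ 2 < 1).
  { assert (Hm : Cmod z ^ 2 = fst z ^ 2 + snd z ^ 2) by apply Cmod2_alt.
    assert (Cmod z ^ 2 < rho ^ 2). { pose proof (Cmod_ge_0 z). nra. }
    assert (E : al ^ 2 + be ^ 2 = (fst z ^ 2 + snd z ^ 2) / rho ^ 2) by (unfold al, be; field; lra).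
    rewrite E. apply (Rmult_lt_reg_r (rho ^ 2)). nra. unfold Rdiv. rewrite Rmult_assoc, Rinv_l by nra. lra. }
  set (X := fun t => 1 - (al * cos t + be * sin t)).
  set (Y := fun t => al * sin t - be * cos t).
  assert (HX : forall t, 0 < X t).
  { intros t. unfold X. pose proof (sin2_cos2 t). unfold Rsqr in H.
    assert ((al * cos t + be * sin t) ^ 2 <= al ^ 2 + be ^ 2).
    { assert (0 <= (al * sin t - be * cos t) ^ 2) by apply pow2_ge_0. nra. }
    nra. }
  assert (HD : forall t, X t ^ 2 + Y t ^ 2 > 0). { intros t. specialize (HX t). nra. }
  assert (Hpt : forall t, (Ci * gam rho t / (gam rho t - z))%C = (Y t / (X t ^ 2 + Y t ^ 2), X t / (X t ^ 2 + Y t ^ 2))).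
  { intros t. rewrite <- Ci_div by (specialize (HX t); lra).
    set (w0 := (X t, Y t)).
    set (a := (al, be) : C). set (eb := (cos t, - sin t) : C).
    assert (Ew0 : w0 = (1 - a * eb)%C).
    { unfold w0, a, eb, X, Y, Cminus, Cplus, Copp, Cmult, RtoC. simpl. f_equal; ring. }
    assert (Eeb : (eb * ei t)%C = RtoC 1).
    { unfold eb, ei, Cmult, RtoC. simpl. pose proof (sin2_cos2 t). unfold Rsqr in H. f_equal; lra. }
    assert (Ez : (RtoC rho * a)%C = z).
    { unfold a, al, be, Cmult, RtoC. destruct z as [zx zy]. simpl. f_equal; field; lra. }
    assert (Eg : (gam rho t - z)%C = (w0 * gam rho t)%C).
    { rewrite Ew0. unfold gam. rewrite <- Ez.
      replace ((1 - a * eb) * (RtoC rho * ei t))%C with (RtoC rho * ei t - RtoC rho * a * (eb * ei t))%C by ring.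
      rewrite Eeb. ring. }
    rewrite Eg. field. split.
    apply C_neq0_of_Cmod. unfold w0. eapply Rlt_le_trans. 2: apply re_le_Cmod. simpl. rewrite Rabs_pos_eq; specialize (HX t); lra.
    apply C_neq0_of_Cmod. rewrite Cmod_gam; lra. }
  rewrite (CInt_ext _ (fun t => (Y t / (X t ^ 2 + Y t ^ 2), X t / (X t ^ 2 + Y t ^ 2)))).
  2: { intros; apply Hpt. }
  apply CInt_unique.
  replace (RtoC (2 * PI) * Ci)%C with (0, 2 * PI).
  2: { unfold RtoC, Ci, Cmult. simpl. f_equal; ring. }
  apply (is_RInt_fct_extend_pair (fun t => (Y t / (X t ^ 2 + Y t ^ 2), X t / (X t ^ 2 + Y t ^ 2)))).
  - assert (K := @is_RInt_derive R_CompleteNormedModule (fun t => ln (X t ^ 2 + Y t ^ 2) / 2)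
        (fun t => Y t / (X t ^ 2 + Y t ^ 2)) 0 (2 * PI)).
    cbv beta in K.
    match type of K with context [is_RInt _ _ _ ?v] => assert (E : v = 0) end.
    { unfold X, Y. rewrite cos_2PI, sin_2PI, cos_0, sin_0. unfold minus, plus, opp; simpl. ring. }
    rewrite E in K. apply K.
    + intros t _. specialize (HX t). specialize (HD t). unfold X, Y in *.
      auto_derive. lra. field. lra.
    + intros t _. apply (@ex_derive_continuous R_AbsRing R_NormedModule). specialize (HX t). specialize (HD t). unfold X, Y in *.
      auto_derive. lra.
  - assert (K := @is_RInt_derive R_CompleteNormedModule (fun t => t + atan (Y t / X t))
        (fun t => X t / (X t ^ 2 + Y t ^ 2)) 0 (2 * PI)).
    cbv beta in K.
    match type of K with context [is_RInt _ _ _ ?v] => assert (E : v = 2 * PI) end.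
    { unfold X, Y. rewrite cos_2PI, sin_2PI, cos_0, sin_0. unfold minus, plus, opp; simpl. ring. }
    rewrite E in K. apply K.
    + intros t _. specialize (HX t). specialize (HD t). unfold X, Y in *.
      auto_derive. lra. field. lra.
    + intros t _. apply (@ex_derive_continuous R_AbsRing R_NormedModule). specialize (HX t). specialize (HD t). unfold X, Y in *.
      auto_derive. lra.
Qed.


Lemma CD_of_ex (f : C -> C) z : @ex_derive C_AbsRing C_NormedModule f z -> CD f z (C_derive f z).
Proof. intros H. apply CD_of_derive. apply C_derive_correct; auto. Qed.

Lemma CD_shift g z w l : CD g (w - z) l -> CD (fun v => g (v - z))%C w l.
Proof.
  intros H eps Heps. destruct (H eps Heps) as [d [Hd H']]. exists d. split; auto.
  intros v Hv. replace (v - z - (w - z))%C with (v - w)%C in H' by ring.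
  replace (v - w)%C with (v - z - (w - z))%C by ring. apply H'.
  replace (v - z - (w - z))%C with (v - w)%C by ring. auto.
Qed.

Lemma Cminus_neq0 (w z : C) : w <> z -> (w - z)%C <> RtoC 0.
Proof. intros H E. apply H. replace w with ((w - z) + z)%C by ring. rewrite E. ring. Qed.

Lemma CD_invs z w : w <> z -> CD (fun v => / (v - z))%C w (- / ((w - z) * (w - z)))%C.
Proof. intros H. apply (CD_shift (fun v => / v)%C). apply CD_inv. apply Cminus_neq0; auto. Qed.

Lemma CC_invs z w : w <> z -> CC (fun v => / (v - z))%C w.
Proof. intros H. eapply CC_of_CD. apply CD_invs; auto. Qed.

Lemma Cmod_pos_neq (w z : C) : w <> z -> 0 < Cmod (w - z).
Proof. intros H. apply Cmod_gt_0. apply Cminus_neq0; auto. Qed.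

Lemma eq_of_Cmod0 (w z : C) : Cmod (w - z) = 0 -> w = z.
Proof. intros H. apply Cmod_eq_0 in H. replace w with ((w - z) + z)%C by ring. rewrite H. ring. Qed.

Definition uq (f : C -> C) (z w : C) : C :=
  if Req_EM_T (Cmod (w - z)) 0 then C_derive f z else ((f w - f z) / (w - z))%C.

Lemma uq_z (f : C -> C) z : uq f z z = C_derive f z.
Proof. unfold uq. destruct (Req_EM_T _ _) as [E|E]; auto. exfalso. apply E.
  replace (z - z)%C with (RtoC 0) by ring. apply Cmod_0. Qed.

Lemma uq_ne (f : C -> C) z w : w <> z -> uq f z w = ((f w - f z) / (w - z))%C.
Proof. intros H. unfold uq. destruct (Req_EM_T _ _) as [E|E]; auto. exfalso. apply H, eq_of_Cmod0; auto. Qed.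

Lemma uq_CD (f : C -> C) Rad z w : (forall v, Cmod v < Rad -> @ex_derive C_AbsRing C_NormedModule f v) ->
  Cmod w < Rad -> w <> z -> exists l, CD (uq f z) w l.
Proof.
  intros Hf Hw Hne. eexists.
  apply (CD_ext_loc (fun v => (f v + - f z) * / (v - z))%C _ _ _ (Cmod (w - z))).
  apply Cmod_pos_neq; auto.
  intros v Hv. rewrite uq_ne. unfold Cdiv. ring.
  intros E; subst v. replace (z - w)%C with (- (w - z))%C in Hv by ring. rewrite Cmod_opp in Hv. lra.
  apply CD_mult. apply CD_plus. apply CD_of_ex; auto. apply CD_const. apply CD_invs; auto.
Qed.

Lemma uq_CC_z (f : C -> C) Rad z : (forall v, Cmod v < Rad -> @ex_derive C_AbsRing C_NormedModule f v) ->
  Cmod z < Rad -> CC (uq f z) z.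
Proof.
  intros Hf Hz eps Heps.
  destruct (CD_of_ex f z (Hf z Hz) (eps / 2)) as [d [Hd H]]. lra.
  exists d. split; auto. intros v Hv. rewrite uq_z.
  destruct (classic (v = z)) as [E|E].
  - subst. rewrite uq_z. replace (C_derive f z - C_derive f z)%C with (RtoC 0) by ring. rewrite Cmod_0. lra.
  - rewrite uq_ne; auto. specialize (H v Hv).
    assert (Hp := Cmod_pos_neq v z E).
    replace ((f v - f z) / (v - z) - C_derive f z)%C with ((f v - f z - (v - z) * C_derive f z) / (v - z))%C
      by (field; apply Cminus_neq0; auto).
    rewrite Cmod_div by (apply Cminus_neq0; auto).
    apply Rle_lt_trans with (eps / 2). 2: lra.
    unfold Rdiv. apply Rmult_le_reg_r with (Cmod (v - z)); auto.
    rewrite Rmult_assoc, Rinv_l by lra. lra.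
Qed.

Lemma uq_CC (f : C -> C) Rad z w : (forall v, Cmod v < Rad -> @ex_derive C_AbsRing C_NormedModule f v) ->
  Cmod z < Rad -> Cmod w < Rad -> CC (uq f z) w.
Proof.
  intros Hf Hz Hw. destruct (classic (w = z)) as [E|E].
  - subst. eapply uq_CC_z; eauto.
  - destruct (uq_CD f Rad z w Hf Hw E) as [l Hl]. eapply CC_of_CD; eauto.
Qed.

Lemma cauchy_formula (f : C -> C) Rad rho z : (forall v, Cmod v < Rad -> @ex_derive C_AbsRing C_NormedModule f v) ->
  0 < rho < Rad -> Cmod z < rho ->
  CInt (fun t => f (gam rho t) * (Ci * gam rho t) / (gam rho t - z))%C 0 (2 * PI) = (f z * (RtoC (2 * PI) * Ci))%C.
Proof.
  intros Hf Hr Hz.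
  set (rho1 := (rho + Rad) / 2).
  assert (Hc0 : CircI rho (uq f z) = RtoC 0).
  { apply (cauchy_circle _ rho rho1). unfold rho1; lra.
    intros w Hw. apply (uq_CC f Rad); [assumption| |]; unfold rho1 in *; lra.
    intros a b c d Hab Hcd Hin. apply (goursat_exc _ z); auto.
    intros w Hw. apply (uq_CC f Rad); [assumption|lra|]. specialize (Hin w Hw). unfold rho1 in *; lra.
    intros w Hw Hne. apply (uq_CD f Rad); auto. specialize (Hin w Hw). unfold rho1 in *; lra. }
  assert (Hne : forall t, gam rho t <> z).
  { intros t E. assert (Cmod (gam rho t) = rho) by (apply Cmod_gam; lra). rewrite E in H. lra. }
  unfold CircI in Hc0.
  rewrite (CInt_ext _ (fun t => f (gam rho t) * (Ci * gam rho t) / (gam rho t - z) - f z * (Ci * gam rho t / (gam rho t - z)))%C) in Hc0.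
  2: { intros t _. rewrite uq_ne; auto. field. apply Cminus_neq0; auto. }
  assert (HCg : forall t, RC (gam rho) t) by (intros; eapply RC_of_RD; apply RD_gam).
  assert (HCk : forall t, CC (fun w => Ci * w / (w - z))%C (gam rho t)).
  { intros t. apply CC_mult. eapply CC_of_CD. eapply CD_mult. apply CD_const. apply CD_id. apply CC_invs; auto. }
  assert (I1 : CexI (fun t => f (gam rho t) * (Ci * gam rho t) / (gam rho t - z))%C 0 (2 * PI)).
  { apply CexI_cont. intros t _.
    apply (RC_comp (fun w => f w * (Ci * w) / (w - z))%C (gam rho)); auto.
    apply CC_mult. apply CC_mult. eapply CC_of_CD. apply CD_of_ex. apply Hf. rewrite Cmod_gam; lra.
    eapply CC_of_CD. eapply CD_mult. apply CD_const. apply CD_id. apply CC_invs; auto. }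
  assert (I2 : CexI (fun t => Ci * gam rho t / (gam rho t - z))%C 0 (2 * PI)).
  { apply CexI_cont. intros t _. apply (RC_comp (fun w => Ci * w / (w - z))%C (gam rho)); auto. }
  rewrite CInt_minus in Hc0; auto.
  2: { apply CexI_ext with (fun t => f z * (Ci * gam rho t / (gam rho t - z)))%C. auto.
       apply CexI_cont. intros t _. apply (RC_comp (fun w => f z * (Ci * w / (w - z)))%C (gam rho)); auto.
       apply CC_mult. intros e He; exists 1; split; [lra|]; intros; replace (f z - f z)%C with (RtoC 0) by ring; rewrite Cmod_0; auto.
       auto. }
  rewrite CInt_mult in Hc0; auto. rewrite J_integral in Hc0; try lra.
  replace (CInt (fun t => f (gam rho t) * (Ci * gam rho t) / (gam rho t - z))%C 0 (2 * PI)) with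
    ((CInt (fun t => f (gam rho t) * (Ci * gam rho t) / (gam rho t - z)) 0 (2 * PI) - f z * (RtoC (2 * PI) * Ci)) + f z * (RtoC (2 * PI) * Ci))%C by ring.
  rewrite Hc0. ring.
Qed.


Lemma RC_bound g a b : a <= b -> (forall t, a <= t <= b -> RC g t) ->
  exists M, 0 <= M /\ forall t, a <= t <= b -> Cmod (g t) <= M.
Proof.
  intros Hab H.
  destruct (continuity_ab_maj (fun t => Cmod (g t)) a b Hab) as [Mx [HM _]].
  { intros c Hc. apply continuity_pt_filterlim. intros P [eps HP].
    destruct (H c Hc eps (cond_pos eps)) as [d [Hd Hd']].
    exists (mkposreal d Hd). intros s Hs. apply HP.
    specialize (Hd' s Hs). unfold ball; simpl. unfold AbsRing_ball, abs, minus, plus, opp; simpl.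
    pose proof (Cmod_sub_ge (g s) (g c)). pose proof (Cmod_sub_ge (g c) (g s)).
    replace (g c - g s)%C with (- (g s - g c))%C in H1 by ring. rewrite Cmod_opp in H1.
    apply Rabs_lt_between'. lra. }
  exists (Cmod (g Mx)). split. apply Cmod_ge_0. auto.
Qed.

Lemma CC_const c z : CC (fun _ => c) z.
Proof. intros e He. exists 1. split. lra. intros. replace (c - c)%C with (RtoC 0) by ring. rewrite Cmod_0. auto. Qed.
Lemma CC_id z : CC (fun w => w) z.
Proof. intros e He. exists e. split; auto. Qed.

Definition Psi (f : C -> C) (w : C) : C := (/ (RtoC (2 * PI) * Ci) * f w * (Ci * w))%C.
Definition P (f : C -> C) (rho : R) (k : C -> C) : C :=
  CInt (fun t => Psi f (gam rho t) * k (gam rho t))%C 0 (2 * PI).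

Definition onC (rho : R) (k : C -> C) : Prop := forall t, CC k (gam rho t).


Lemma two_pi_Ci_neq : (RtoC (2 * PI) * Ci)%C <> RtoC 0.
Proof. apply C_neq0_of_Cmod. rewrite Cmod_mult, Cmod_Ci, Cmod_R, Rabs_pos_eq; pose proof PI_RGT_0; lra. Qed.

Lemma Ci_neq0 : Ci <> RtoC 0.
Proof. apply C_neq0_of_Cmod. rewrite Cmod_Ci. lra. Qed.
Lemma twoPI_neq0 : RtoC (2 * PI) <> RtoC 0.
Proof. apply C_neq0_of_Cmod. rewrite Cmod_R, Rabs_pos_eq; pose proof PI_RGT_0; lra. Qed.

Lemma Psi_CC (f : C -> C) Rad rho : (forall v, Cmod v < Rad -> @ex_derive C_AbsRing C_NormedModule f v) ->
  0 < rho < Rad -> onC rho (Psi f).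
Proof.
  intros Hf Hr t. unfold Psi. apply CC_mult. apply CC_mult. apply CC_const.
  eapply CC_of_CD. apply CD_of_ex. apply Hf. rewrite Cmod_gam; lra.
  apply CC_mult. apply CC_const. apply CC_id.
Qed.

Lemma P_int (f : C -> C) Rad rho k : (forall v, Cmod v < Rad -> @ex_derive C_AbsRing C_NormedModule f v) ->
  0 < rho < Rad -> onC rho k -> CexI (fun t => Psi f (gam rho t) * k (gam rho t))%C 0 (2 * PI).
Proof.
  intros Hf Hr Hk. apply CexI_cont. intros t _.
  apply (RC_comp (fun w => Psi f w * k w)%C (gam rho)). eapply RC_of_RD; apply RD_gam.
  apply CC_mult. apply (Psi_CC f Rad); auto. apply Hk.
Qed.

Lemma P_ext (f : C -> C) rho k1 k2 : (forall t, k1 (gam rho t) = k2 (gam rho t)) -> P f rho k1 = P f rho k2.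
Proof. intros H. unfold P. apply CInt_ext. intros t _. rewrite H. reflexivity. Qed.

Lemma P_minus (f : C -> C) Rad rho k1 k2 : (forall v, Cmod v < Rad -> @ex_derive C_AbsRing C_NormedModule f v) ->
  0 < rho < Rad -> onC rho k1 -> onC rho k2 ->
  P f rho (fun v => k1 v - k2 v)%C = (P f rho k1 - P f rho k2)%C.
Proof.
  intros Hf Hr H1 H2. unfold P. rewrite <- CInt_minus by (eapply P_int; eauto).
  apply CInt_ext. intros; ring.
Qed.

Lemma P_scal (f : C -> C) Rad rho c k : (forall v, Cmod v < Rad -> @ex_derive C_AbsRing C_NormedModule f v) ->
  0 < rho < Rad -> onC rho k -> P f rho (fun v => c * k v)%C = (c * P f rho k)%C.
Proof.
  intros Hf Hr H1. unfold P. rewrite <- CInt_mult by (eapply P_int; eauto).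
  apply CInt_ext. intros; ring.
Qed.

Lemma onC_minus rho k1 k2 : onC rho k1 -> onC rho k2 -> onC rho (fun v => k1 v - k2 v)%C.
Proof.
  intros H1 H2 t e He. destruct (H1 t (e/2)) as [d1 [Hd1 K1]]. lra. destruct (H2 t (e/2)) as [d2 [Hd2 K2]]. lra.
  exists (Rmin d1 d2). split. apply Rmin_pos; auto. intros w Hw.
  assert (Hw1 : Cmod (w - gam rho t) < d1) by (eapply Rlt_le_trans; [exact Hw|apply Rmin_l]).
  assert (Hw2 : Cmod (w - gam rho t) < d2) by (eapply Rlt_le_trans; [exact Hw|apply Rmin_r]).
  specialize (K1 w Hw1). specialize (K2 w Hw2).
  replace (k1 w - k2 w - (k1 (gam rho t) - k2 (gam rho t)))%C with ((k1 w - k1 (gam rho t)) + - (k2 w - k2 (gam rho t)))%C by ring.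
  eapply Rle_lt_trans. apply Cmod_triangle. rewrite Cmod_opp. lra.
Qed.

Lemma onC_scal rho c k : onC rho k -> onC rho (fun v => c * k v)%C.
Proof. intros H t. apply CC_mult. apply CC_const. apply H. Qed.

Lemma onC_inv rho a : Cmod a < rho -> onC rho (fun v => / (v - a))%C.
Proof.
  intros Ha t. apply CC_invs. intros E.
  assert (0 <= rho) by (pose proof (Cmod_ge_0 a); lra).
  assert (Cmod (gam rho t) = rho) by (apply Cmod_gam; auto). rewrite E in H0. lra.
Qed.

Lemma onC_mult rho k1 k2 : onC rho k1 -> onC rho k2 -> onC rho (fun v => k1 v * k2 v)%C.
Proof. intros H1 H2 t. apply CC_mult; auto. Qed.

Lemma Psi_bound (f : C -> C) Rad rho : (forall v, Cmod v < Rad -> @ex_derive C_AbsRing C_NormedModule f v) ->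
  0 < rho < Rad -> exists M, 0 <= M /\ forall t, 0 <= t <= 2 * PI -> Cmod (Psi f (gam rho t)) <= M.
Proof.
  intros Hf Hr. apply RC_bound. pose proof PI_RGT_0; lra.
  intros t _. apply (RC_comp (Psi f) (gam rho)). eapply RC_of_RD; apply RD_gam.
  apply (Psi_CC f Rad); auto.
Qed.

Lemma P_bound (f : C -> C) Rad rho k M Kb : (forall v, Cmod v < Rad -> @ex_derive C_AbsRing C_NormedModule f v) ->
  0 < rho < Rad -> (forall t, 0 <= t <= 2 * PI -> Cmod (Psi f (gam rho t)) <= M) ->
  onC rho k -> (forall t, 0 <= t <= 2 * PI -> Cmod (k (gam rho t)) <= Kb) ->
  Cmod (P f rho k) <= 2 * PI * (M * Kb).
Proof.
  intros Hf Hr HM Hk HK. unfold P.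
  apply Rle_trans with ((2 * PI - 0) * (M * Kb)). 2: right; ring.
  apply CInt_bound. pose proof PI_RGT_0; lra.
  intros t Ht. rewrite Cmod_mult. apply Rmult_le_compat; try apply Cmod_ge_0; auto.
  eapply P_int; eauto.
Qed.

Lemma P_K1 (f : C -> C) Rad rho z : (forall v, Cmod v < Rad -> @ex_derive C_AbsRing C_NormedModule f v) ->
  0 < rho < Rad -> Cmod z < rho -> f z = P f rho (fun v => / (v - z))%C.
Proof.
  intros Hf Hr Hz.
  assert (HI : CexI (fun t => f (gam rho t) * (Ci * gam rho t) / (gam rho t - z))%C 0 (2 * PI)).
  { apply (CexI_ext (fun t => Psi f (gam rho t) * (/ (gam rho t - z)) * (RtoC (2 * PI) * Ci))%C).
    intros t _. unfold Psi.
    assert (Hne : (gam rho t - z)%C <> RtoC 0).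
    { apply Cminus_neq0. intros E. assert (Cmod (gam rho t) = rho) by (apply Cmod_gam; lra). rewrite E in H. lra. }
    pose proof two_pi_Ci_neq. field. split; [auto|split; [apply Ci_neq0|apply twoPI_neq0]].
    apply CexI_ext with (fun t => (RtoC (2 * PI) * Ci) * (Psi f (gam rho t) * (/ (gam rho t - z))))%C.
    intros; ring.
    apply CexI_cont. intros t _. apply (RC_comp (fun w => (RtoC (2 * PI) * Ci) * (Psi f w * / (w - z)))%C (gam rho)).
    eapply RC_of_RD; apply RD_gam. apply CC_mult. apply CC_const. apply CC_mult. apply (Psi_CC f Rad); auto.
    apply onC_inv; auto. }
  unfold P. rewrite (CInt_ext _ (fun t => / (RtoC (2 * PI) * Ci) * (f (gam rho t) * (Ci * gam rho t) / (gam rho t - z)))%C).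
  2: { intros; unfold Psi, Cdiv; ring. }
  rewrite CInt_mult by auto. rewrite (cauchy_formula f Rad); auto. field. split; [apply Ci_neq0|apply twoPI_neq0].
Qed.


Definition K2 (f : C -> C) rho z := P f rho (fun v => / (v - z) * / (v - z))%C.
Definition K3 (f : C -> C) rho z := P f rho (fun v => / (v - z) * / (v - z) * / (v - z))%C.

Lemma gam_dist rho t a : 0 <= rho -> rho - Cmod a <= Cmod (gam rho t - a).
Proof. intros. pose proof (Cmod_sub_ge (gam rho t) a). rewrite Cmod_gam in H0; auto. Qed.

Lemma inv_bound rho t a D : 0 < D -> D <= rho - Cmod a -> Cmod (/ (gam rho t - a))%C <= / D.
Proof.
  intros HD HDa. assert (0 <= rho) by (pose proof (Cmod_ge_0 a); lra).
  pose proof (gam_dist rho t a H).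
  rewrite Cmod_inv. apply Rinv_le_contravar; lra.
  apply C_neq0_of_Cmod. lra.
Qed.

Lemma gam_neq rho t a : Cmod a < rho -> (gam rho t - a)%C <> RtoC 0.
Proof. intros H. apply C_neq0_of_Cmod. pose proof (Cmod_ge_0 a). pose proof (gam_dist rho t a). lra. Qed.

Lemma mul4_le a b c d A B Cc Dd : 0 <= a <= A -> 0 <= b <= B -> 0 <= c <= Cc -> 0 <= d <= Dd ->
  a * b * c * d <= A * B * Cc * Dd.
Proof.
  intros. apply Rmult_le_compat; try lra. repeat apply Rmult_le_pos; lra.
  apply Rmult_le_compat; try lra. apply Rmult_le_pos; lra.
  apply Rmult_le_compat; lra.
Qed.

Lemma P_comb (f : C -> C) Rad rho k1 k0 k2 k3 a b : (forall v, Cmod v < Rad -> @ex_derive C_AbsRing C_NormedModule f v) ->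
  0 < rho < Rad -> onC rho k1 -> onC rho k0 -> onC rho k2 -> onC rho k3 ->
  (P f rho k1 - P f rho k0 - a * P f rho k2 - b * P f rho k3)%C =
  P f rho (fun v => k1 v - k0 v - a * k2 v - b * k3 v)%C.
Proof.
  intros Hf Hr H1 H0 H2 H3.
  assert (E1 := P_minus f Rad rho (fun v => k1 v - k0 v - a * k2 v)%C (fun v => b * k3 v)%C Hf Hr).
  cbv beta in E1. rewrite E1.
  2: apply onC_minus; [apply onC_minus; auto|apply onC_scal; auto].
  2: apply onC_scal; auto.
  assert (E2 := P_minus f Rad rho (fun v => k1 v - k0 v)%C (fun v => a * k2 v)%C Hf Hr).
  cbv beta in E2. rewrite E2.
  2: apply onC_minus; auto. 2: apply onC_scal; auto.
  rewrite (P_minus f Rad rho k1 k0); auto.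
  rewrite (P_scal f Rad rho a k2); auto. rewrite (P_scal f Rad rho b k3); auto.
Qed.

Lemma E1_bound (f : C -> C) Rad rho M R0 z h : (forall v, Cmod v < Rad -> @ex_derive C_AbsRing C_NormedModule f v) ->
  0 < rho < Rad -> (forall t, 0 <= t <= 2 * PI -> Cmod (Psi f (gam rho t)) <= M) ->
  Cmod z <= R0 -> R0 < rho -> Cmod h <= (rho - R0) / 2 ->
  Cmod (f (z + h) - f z - h * K2 f rho z - h * h * K3 f rho z)%C <=
    2 * PI * (M * (Cmod h ^ 3 * (2 / (rho - R0) ^ 4))).
Proof.
  intros Hf Hr HM Hz HR0 Hh.
  set (D := rho - R0).
  assert (HD : 0 < D) by (unfold D; lra).
  assert (Hzh : Cmod (z + h) <= R0 + D / 2).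
  { eapply Rle_trans. apply Cmod_triangle. unfold D in *; lra. }
  rewrite (P_K1 f Rad rho (z + h)); auto; [|unfold D in *; lra].
  rewrite (P_K1 f Rad rho z); auto; [|lra].
  unfold K2, K3.
  assert (O0 : onC rho (fun v => / (v - z))%C) by (apply onC_inv; lra).
  assert (O1 : onC rho (fun v => / (v - (z + h)))%C) by (apply onC_inv; unfold D in *; lra).
  assert (O2 : onC rho (fun v => / (v - z) * / (v - z))%C) by (apply onC_mult; auto).
  assert (O3 : onC rho (fun v => / (v - z) * / (v - z) * / (v - z))%C) by (repeat apply onC_mult; auto).
  rewrite (P_comb f Rad rho); auto.
  rewrite (P_ext f rho _ (fun v => h * h * h * (/ (v - z) * / (v - z) * / (v - z) * / (v - (z + h))))%C).
  2: { intros t. assert (N1 := gam_neq rho t z). assert (N2 := gam_neq rho t (z + h)).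
       field. split. apply N2. unfold D in *; lra. apply N1. lra. }
  apply (P_bound f Rad); auto.
  apply onC_scal. repeat apply onC_mult; auto.
  intros t _. rewrite !Cmod_mult.
  assert (B1 : Cmod (/ (gam rho t - z))%C <= / D) by (apply inv_bound; unfold D in *; lra).
  assert (B2 : Cmod (/ (gam rho t - (z + h)))%C <= / (D / 2)) by (apply inv_bound; unfold D in *; lra).
  assert (Hi : 0 < / D) by (apply Rinv_0_lt_compat; lra).
  pose proof (Cmod_ge_0 h). pose proof (Cmod_ge_0 (/ (gam rho t - z))%C). pose proof (Cmod_ge_0 (/ (gam rho t - (z + h)))%C).
  replace (Cmod h ^ 3 * (2 / D ^ 4)) with (Cmod h * Cmod h * Cmod h * (/ D * / D * / D * / (D / 2))) by (field; lra).
  apply Rmult_le_compat_l. repeat apply Rmult_le_pos; lra.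
  apply mul4_le; auto.
Qed.


Lemma mul2_le a b A B : 0 <= a <= A -> 0 <= b <= B -> a * b <= A * B.
Proof. intros. apply Rmult_le_compat; lra. Qed.

Lemma E2_bound (f : C -> C) Rad rho M R0 z h : (forall v, Cmod v < Rad -> @ex_derive C_AbsRing C_NormedModule f v) ->
  0 < rho < Rad -> (forall t, 0 <= t <= 2 * PI -> Cmod (Psi f (gam rho t)) <= M) ->
  Cmod z <= R0 -> 0 <= R0 -> R0 < rho -> Cmod h <= (rho - R0) / 2 ->
  Cmod (K2 f rho (z + h) - K2 f rho z - (RtoC 2 * h) * K3 f rho z)%C <=
    2 * PI * (M * (Cmod h * Cmod h * (28 * rho / (rho - R0) ^ 5))).
Proof.
  intros Hf Hr HM Hz HR0' HR0 Hh.
  set (D := rho - R0).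
  assert (HD : 0 < D) by (unfold D; lra).
  assert (Hzh : Cmod (z + h) <= R0 + D / 2).
  { eapply Rle_trans. apply Cmod_triangle. unfold D in *; lra. }
  unfold K2, K3.
  assert (O0 : onC rho (fun v => / (v - z))%C) by (apply onC_inv; lra).
  assert (O1 : onC rho (fun v => / (v - (z + h)))%C) by (apply onC_inv; unfold D in *; lra).
  replace (P f rho (fun v => / (v - (z + h)) * / (v - (z + h)))%C - P f rho (fun v => / (v - z) * / (v - z))%C -
     RtoC 2 * h * P f rho (fun v => / (v - z) * / (v - z) * / (v - z))%C)%C with
    (P f rho (fun v => / (v - (z + h)) * / (v - (z + h)))%C - P f rho (fun v => / (v - z) * / (v - z))%C -
     RtoC 2 * h * P f rho (fun v => / (v - z) * / (v - z) * / (v - z))%C -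
     RtoC 0 * P f rho (fun v => / (v - z) * / (v - z) * / (v - z))%C)%C by ring.
  rewrite (P_comb f Rad rho); auto; try (repeat apply onC_mult; auto).
  rewrite (P_ext f rho _ (fun v => h * h * (RtoC 3 * (v - z) - RtoC 2 * h) *
     (/ (v - z) * / (v - z) * / (v - z)) * (/ (v - (z + h)) * / (v - (z + h))))%C).
  2: { intros t. assert (N1 := gam_neq rho t z). assert (N2 := gam_neq rho t (z + h)).
       field. split. apply N2. unfold D in *; lra. apply N1. lra. }
  apply (P_bound f Rad); auto.
  apply onC_mult; [apply onC_mult; [|repeat apply onC_mult; auto]|repeat apply onC_mult; auto].
  apply onC_mult. apply onC_mult; intros t; apply CC_const.
  apply onC_minus. apply onC_scal. intros t. apply CC_of_CD with (l := RtoC 1). 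
  apply CD_ext with (fun w => w + - z)%C. intros; ring. replace (RtoC 1) with (1 + 0)%C by ring.
  apply CD_plus. apply CD_id. apply CD_const. intros t; apply CC_const.
  intros t _. rewrite !Cmod_mult.
  assert (B1 : Cmod (/ (gam rho t - z))%C <= / D) by (apply inv_bound; unfold D in *; lra).
  assert (B2 : Cmod (/ (gam rho t - (z + h)))%C <= / (D / 2)) by (apply inv_bound; unfold D in *; lra).
  assert (B3 : Cmod (RtoC 3 * (gam rho t - z) - RtoC 2 * h)%C <= 7 * rho).
  { replace (RtoC 3 * (gam rho t - z) - RtoC 2 * h)%C with (RtoC 3 * (gam rho t + - z) + - (RtoC 2 * h))%C by ring.
    eapply Rle_trans. apply Cmod_triangle. rewrite Cmod_opp, !Cmod_mult, !Cmod_R.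
    rewrite (Rabs_pos_eq 3), (Rabs_pos_eq 2) by lra.
    assert (Cmod (gam rho t + - z) <= rho + R0).
    { eapply Rle_trans. apply Cmod_triangle. rewrite Cmod_opp, Cmod_gam; lra. }
    unfold D in *. lra. }
  assert (Hi : 0 < / D) by (apply Rinv_0_lt_compat; lra).
  pose proof (Cmod_ge_0 h). pose proof (Cmod_ge_0 (/ (gam rho t - z))%C). pose proof (Cmod_ge_0 (/ (gam rho t - (z + h)))%C).
  pose proof (Cmod_ge_0 (RtoC 3 * (gam rho t - z) - RtoC 2 * h)%C).
  replace (Cmod h * Cmod h * (28 * rho / D ^ 5)) with
    (Cmod h * Cmod h * (7 * rho) * (/ D * / D * / D) * (/ (D / 2) * / (D / 2))) by (field; lra).
  apply mul2_le. split. repeat apply Rmult_le_pos; lra.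
  apply mul2_le. split. repeat apply Rmult_le_pos; lra.
  apply mul2_le. split. repeat apply Rmult_le_pos; lra. apply mul2_le; lra. lra.
  split. repeat apply Rmult_le_pos; lra. apply mul2_le. split. apply Rmult_le_pos; lra. apply mul2_le; lra. lra.
  split. repeat apply Rmult_le_pos; lra. apply mul2_le; lra.
Qed.

Lemma E3_bound (f : C -> C) Rad rho M R0 z : (forall v, Cmod v < Rad -> @ex_derive C_AbsRing C_NormedModule f v) ->
  0 < rho < Rad -> (forall t, 0 <= t <= 2 * PI -> Cmod (Psi f (gam rho t)) <= M) ->
  Cmod z <= R0 -> R0 < rho ->
  Cmod (K3 f rho z) <= 2 * PI * (M * (/ (rho - R0) * / (rho - R0) * / (rho - R0))).
Proof.
  intros Hf Hr HM Hz HR0. unfold K3.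
  assert (O0 : onC rho (fun v => / (v - z))%C) by (apply onC_inv; lra).
  apply (P_bound f Rad); auto. repeat apply onC_mult; auto.
  intros t _. rewrite !Cmod_mult.
  assert (B1 : Cmod (/ (gam rho t - z))%C <= / (rho - R0)) by (apply inv_bound; lra).
  pose proof (Cmod_ge_0 (/ (gam rho t - z))%C).
  apply mul2_le. split. apply Rmult_le_pos; lra. apply mul2_le; lra. lra.
Qed.


Lemma CD_from_quad (g : C -> C) z l eta Cst : 0 < eta -> 0 <= Cst ->
  (forall h, Cmod h <= eta -> Cmod (g (z + h) - g z - h * l)%C <= Cst * Cmod h * Cmod h) -> CD g z l.
Proof.
  intros He HC H eps Heps.
  exists (Rmin eta (eps / (Cst + 1))). split. apply Rmin_pos; auto. apply Rdiv_lt_0_compat; lra.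
  intros w Hw.
  assert (Hw1 : Cmod (w - z) <= eta) by (left; eapply Rlt_le_trans; [exact Hw|apply Rmin_l]).
  assert (Hw2 : Cmod (w - z) < eps / (Cst + 1)) by (eapply Rlt_le_trans; [exact Hw|apply Rmin_r]).
  specialize (H (w - z)%C Hw1). replace (z + (w - z))%C with w in H by ring.
  eapply Rle_trans. exact H.
  pose proof (Cmod_ge_0 (w - z)).
  assert (Cst * Cmod (w - z) <= eps).
  { apply Rle_trans with ((Cst + 1) * (eps / (Cst + 1))). apply Rmult_le_compat; lra. right; field; lra. }
  nra.
Qed.

Lemma Cderiv_f (f : C -> C) Rad rho M z : (forall v, Cmod v < Rad -> @ex_derive C_AbsRing C_NormedModule f v) ->
  0 < rho < Rad -> 0 <= M -> (forall t, 0 <= t <= 2 * PI -> Cmod (Psi f (gam rho t)) <= M) ->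
  Cmod z < rho -> C_derive f z = K2 f rho z.
Proof.
  intros Hf Hr HM0 HM Hz. apply C_derive_of_CD.
  set (D := rho - Cmod z). assert (HD : 0 < D) by (unfold D; lra).
  pose proof PI_RGT_0.
  apply (CD_from_quad _ _ _ (D / 2) (2 * PI * (M * (/ D * / D * / D)) + 2 * PI * (M * (2 / D ^ 4)) * (D / 2))).
  lra. assert (0 < / D) by (apply Rinv_0_lt_compat; lra).
  assert (0 <= 2 / D ^ 4) by (apply Rdiv_le_0_compat; [lra|apply pow_lt; lra]).
  assert (0 <= / D * / D * / D) by (repeat apply Rmult_le_pos; lra).
  assert (0 <= 2 * PI * (M * (/ D * / D * / D))) by (apply Rmult_le_pos; [lra|apply Rmult_le_pos; assumption]).
  assert (0 <= 2 * PI * (M * (2 / D ^ 4))) by (apply Rmult_le_pos; [lra|apply Rmult_le_pos; assumption]).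
  apply Rplus_le_le_0_compat; auto. apply Rmult_le_pos; [auto|lra].
  intros h Hh.
  assert (E1 := E1_bound f Rad rho M (Cmod z) z h Hf Hr HM (Rle_refl _)).
  assert (E3 := E3_bound f Rad rho M (Cmod z) z Hf Hr HM (Rle_refl _)).
  fold D in E1, E3. specialize (E1 Hz Hh). specialize (E3 Hz).
  replace (f (z + h) - f z - h * K2 f rho z)%C with
    ((f (z + h) - f z - h * K2 f rho z - h * h * K3 f rho z) + h * h * K3 f rho z)%C by ring.
  eapply Rle_trans. apply Cmod_triangle. rewrite !Cmod_mult.
  pose proof (Cmod_ge_0 h).
  assert (Hh3 : Cmod h ^ 3 * (2 / D ^ 4) <= Cmod h * Cmod h * (2 / D ^ 4) * (D / 2)).
  { assert (0 <= 2 / D ^ 4) by (apply Rdiv_le_0_compat; [lra|apply pow_lt; lra]).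
    replace (Cmod h ^ 3) with (Cmod h * Cmod h * Cmod h) by ring.
    assert (0 <= Cmod h * Cmod h * (2 / D ^ 4)) by (apply Rmult_le_pos; auto; nra).
    replace (Cmod h * Cmod h * Cmod h * (2 / D ^ 4)) with ((Cmod h * Cmod h * (2 / D ^ 4)) * Cmod h) by ring.
    apply Rmult_le_compat_l; auto. }
  assert (0 <= M * (2 / D ^ 4)) by (apply Rmult_le_pos; [lra|apply Rdiv_le_0_compat; [lra|apply pow_lt; lra]]).
  assert (X1 : 2 * PI * (M * (Cmod h ^ 3 * (2 / D ^ 4))) <= 2 * PI * (M * (2 / D ^ 4)) * (D / 2) * Cmod h * Cmod h).
  { replace (2 * PI * (M * (2 / D ^ 4)) * (D / 2) * Cmod h * Cmod h) with (2 * PI * (M * (Cmod h * Cmod h * (2 / D ^ 4) * (D / 2)))) by ring.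
    apply Rmult_le_compat_l. lra. apply Rmult_le_compat_l; lra. }
  assert (X2 : Cmod h * Cmod h * Cmod (K3 f rho z) <= 2 * PI * (M * (/ D * / D * / D)) * Cmod h * Cmod h).
  { assert (0 <= Cmod h * Cmod h) by nra. nra. }
  lra.
Qed.

Lemma Cderiv2_f (f : C -> C) Rad rho M z : (forall v, Cmod v < Rad -> @ex_derive C_AbsRing C_NormedModule f v) ->
  0 < rho < Rad -> 0 <= M -> (forall t, 0 <= t <= 2 * PI -> Cmod (Psi f (gam rho t)) <= M) ->
  Cmod z < rho -> C_derive (C_derive f) z = (RtoC 2 * K3 f rho z)%C.
Proof.
  intros Hf Hr HM0 HM Hz. apply C_derive_of_CD.
  set (D := rho - Cmod z). assert (HD : 0 < D) by (unfold D; lra).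
  pose proof PI_RGT_0.
  apply (CD_ext_loc (K2 f rho) _ _ _ D); auto.
  { intros w Hw. symmetry. apply (Cderiv_f f Rad rho M); auto.
    replace w with ((w - z) + z)%C by ring. eapply Rle_lt_trans. apply Cmod_triangle. unfold D in Hw. lra. }
  apply (CD_from_quad _ _ _ (D / 2) (2 * PI * (M * (28 * rho / D ^ 5)))). lra.
  { apply Rmult_le_pos. lra. apply Rmult_le_pos. auto. apply Rdiv_le_0_compat. lra. apply pow_lt; lra. }
  intros h Hh.
  assert (E2 := E2_bound f Rad rho M (Cmod z) z h Hf Hr HM (Rle_refl _) (Cmod_ge_0 z) Hz).
  fold D in E2. specialize (E2 Hh).
  replace (K2 f rho (z + h) - K2 f rho z - h * (RtoC 2 * K3 f rho z))%C with
    (K2 f rho (z + h) - K2 f rho z - RtoC 2 * h * K3 f rho z)%C by ring.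
  eapply Rle_trans. exact E2. right. ring.
Qed.


Lemma key_identity (Q Qi z F0 F1 F2 k2 k3 : C) :
  Q <> RtoC 0 -> (Q - 1)%C <> RtoC 0 -> z <> RtoC 0 -> Qi = (/ Q)%C -> (Qi - 1)%C <> RtoC 0 ->
  ((1 - z) * Q * ((F1 - F0) / ((Q - 1) * z) - (F2 - F0) / ((Qi - 1) * z)) / (Q - 1) - RtoC 2 * k3 * z * (1 - z))%C =
  ((1 - z) * (Q - 1) * z * k3 +
   (1 - z) * Q * ((F1 - F0 - (Q - 1) * z * k2 - (Q - 1) * z * ((Q - 1) * z) * k3) / ((Q - 1) * z) -
                  (F2 - F0 - (Qi - 1) * z * k2 - (Qi - 1) * z * ((Qi - 1) * z) * k3) / ((Qi - 1) * z)) / (Q - 1))%C.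
Proof.
  intros HQ HQ1 Hz HQi HQi1. subst Qi. field. repeat split; auto.
  intros E. apply HQ1. replace (Q - 1)%C with (- (1 - Q))%C by ring. rewrite E. ring.
Qed.

Lemma T_over_h (T h : C) A : 0 <= A -> h <> RtoC 0 -> Cmod T <= A * Cmod h ^ 3 -> Cmod (T / h)%C <= A * Cmod h * Cmod h.
Proof.
  intros HA Hh HT. assert (Hp : 0 < Cmod h) by (apply Cmod_gt_0; auto).
  rewrite Cmod_div by auto. unfold Rdiv. apply Rmult_le_reg_r with (Cmod h). auto.
  rewrite Rmult_assoc, Rinv_l by lra. rewrite Rmult_1_r. replace (A * Cmod h * Cmod h * Cmod h) with (A * Cmod h ^ 3) by ring. auto.
Qed.

Theorem mainTheorem4 (Rad : R) (f : C -> C) :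
  1 < Rad -> holomorphic_on_disk Rad f ->
  forall r : R, 0 < r < Rad ->
  forall eps : R, 0 < eps ->
  exists delta : R, 0 < delta /\
    forall q : R, 1 < q < 1 + delta ->
    forall z : C, Cmod z <= r ->
      Cmod (Cminus (Lq q f z) (L1 f z)) < eps.
Proof.
  intros HR Hf r Hr eps Heps.
  unfold holomorphic_on_disk in Hf.
  set (rho := (r + Rad) / 2).
  assert (Hrho : 0 < rho < Rad) by (unfold rho; lra).
  assert (Hrr : r < rho) by (unfold rho; lra).
  set (D := rho - r). assert (HD : 0 < D) by (unfold D; lra).
  destruct (Psi_bound f Rad rho Hf Hrho) as [M [HM0 HM]].
  pose proof PI_RGT_0 as HPI.
  set (A := 2 * PI * (M * (2 / D ^ 4))).
  set (B3 := 2 * PI * (M * (/ D * / D * / D))).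
  assert (HA : 0 <= A).
  { unfold A. apply Rmult_le_pos. lra. apply Rmult_le_pos. auto. apply Rdiv_le_0_compat. lra. apply pow_lt; lra. }
  assert (HB3 : 0 <= B3).
  { unfold B3. apply Rmult_le_pos. lra. apply Rmult_le_pos. auto.
    assert (0 < / D) by (apply Rinv_0_lt_compat; lra). repeat apply Rmult_le_pos; lra. }
  set (Cst := (1 + r) * r * B3 + 4 * A * r * r * (1 + r)).
  assert (HCst : 0 <= Cst).
  { unfold Cst. apply Rplus_le_le_0_compat. apply Rmult_le_pos; [apply Rmult_le_pos; lra|exact HB3].
    apply Rmult_le_pos; [|lra]; apply Rmult_le_pos; [|lra]; apply Rmult_le_pos; [|lra]; apply Rmult_le_pos; [lra|exact HA]. }
  exists (Rmin 1 (Rmin (D / (2 * r)) (eps / (Cst + 1)))). split.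
  { apply Rmin_pos. lra. apply Rmin_pos; apply Rdiv_lt_0_compat; lra. }
  intros q Hq z Hz.
  set (e := q - 1).
  assert (He : 0 < e) by (unfold e; lra).
  assert (He1 : e < 1) by (unfold e; pose proof (Rmin_l 1 (Rmin (D / (2 * r)) (eps / (Cst + 1)))); lra).
  assert (He2 : e < D / (2 * r)).
  { unfold e. pose proof (Rmin_r 1 (Rmin (D / (2 * r)) (eps / (Cst + 1)))).
    pose proof (Rmin_l (D / (2 * r)) (eps / (Cst + 1))). lra. }
  assert (He3 : e < eps / (Cst + 1)).
  { unfold e. pose proof (Rmin_r 1 (Rmin (D / (2 * r)) (eps / (Cst + 1)))).
    pose proof (Rmin_r (D / (2 * r)) (eps / (Cst + 1))). lra. }
  assert (Her : e * r <= D / 2).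
  { apply Rmult_lt_compat_r with (r := r) in He2; [|lra].
    replace (D / (2 * r) * r) with (D / 2) in He2 by (field; lra). lra. }
  destruct (Req_dec (Cmod z) 0) as [Hz0|Hz0].
  -
    apply Cmod_eq_0 in Hz0. subst z.
    unfold Lq, L1, Dp. destruct (Req_EM_T (Cmod 0) 0) as [_|E]; [|exfalso; apply E; apply Cmod_0].
    replace (Cminus (Cdiv (Cmult (Cmult (Cminus (RtoC 1) 0) (RtoC q)) (Cminus (C_derive f 0) (C_derive f 0))) (RtoC (q - 1)))
       (Cmult (Cmult (C_derive (C_derive f) 0) 0) (Cminus (RtoC 1) 0))) with (RtoC 0).
    rewrite Cmod_0. lra.
    field. apply C_neq0_of_Cmod. rewrite Cmod_R, Rabs_pos_eq; lra.
  -
    assert (Hzne : z <> RtoC 0) by (intros E; apply Hz0; rewrite E; apply Cmod_0).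
    assert (Hzr : Cmod z < rho) by lra.
    assert (Hd1 := Cderiv2_f f Rad rho M z Hf Hrho HM0 HM Hzr).
    unfold Lq, L1, Dp. destruct (Req_EM_T (Cmod z) 0) as [E|_]; [contradiction|].
    rewrite Hd1.
    rewrite (RtoC_minus q 1), (RtoC_minus (/ q) 1).
    set (Qc := RtoC q). set (Qi := RtoC (/ q)).
    assert (HQ : Qc <> RtoC 0) by (apply C_neq0_of_Cmod; unfold Qc; rewrite Cmod_R, Rabs_pos_eq; lra).
    assert (HQ1 : (Qc - 1)%C <> RtoC 0).
    { unfold Qc. rewrite <- RtoC_minus. apply C_neq0_of_Cmod. rewrite Cmod_R, Rabs_pos_eq; lra. }
    assert (HQi : Qi = (/ Qc)%C) by (unfold Qi, Qc; apply RtoC_inv; lra).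
    assert (Hiq : 0 < / q < 1).
    { split. apply Rinv_0_lt_compat; lra. rewrite <- Rinv_1. apply Rinv_lt_contravar; lra. }
    assert (HQi1 : (Qi - 1)%C <> RtoC 0).
    { unfold Qi. rewrite <- RtoC_minus. apply C_neq0_of_Cmod. rewrite Cmod_R, Rabs_left; lra. }
    replace (Qc * z)%C with (z + (Qc - 1) * z)%C by ring.
    replace (Qi * z)%C with (z + (Qi - 1) * z)%C by ring.
    rewrite (key_identity Qc Qi z (f z) (f (z + (Qc - 1) * z)%C) (f (z + (Qi - 1) * z)%C) (K2 f rho z) (K3 f rho z)); auto.
    set (h1 := ((Qc - 1) * z)%C). set (h2 := ((Qi - 1) * z)%C).
    assert (Hh1 : Cmod h1 = e * Cmod z).
    { unfold h1, Qc. rewrite <- RtoC_minus, Cmod_mult, Cmod_R, Rabs_pos_eq; unfold e; lra. }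
    assert (Hh2 : Cmod h2 = (1 - / q) * Cmod z).
    { unfold h2, Qi. rewrite <- RtoC_minus, Cmod_mult, Cmod_R, Rabs_left; lra. }
    assert (Hiqe : 1 - / q <= e).
    { unfold e. assert (/ q * q = 1) by (field; lra).
      assert (0 <= (q - 1) * (1 - / q)) by (apply Rmult_le_pos; lra). nra. }
    pose proof (Cmod_ge_0 z).
    assert (Bh1 : Cmod h1 <= e * r) by (rewrite Hh1; apply Rmult_le_compat_l; lra).
    assert (Bh2 : Cmod h2 <= e * r).
    { rewrite Hh2. apply Rle_trans with (e * Cmod z). apply Rmult_le_compat_r; lra. apply Rmult_le_compat_l; lra. }
    assert (T1 := E1_bound f Rad rho M r z h1 Hf Hrho HM Hz Hrr ltac:(fold D; lra)).
    assert (T2 := E1_bound f Rad rho M r z h2 Hf Hrho HM Hz Hrr ltac:(fold D; lra)).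
    fold D in T1, T2. fold A in T1, T2.
    assert (h1ne : h1 <> RtoC 0) by (apply C_neq0_of_Cmod; rewrite Hh1; apply Rmult_lt_0_compat; auto; pose proof (Cmod_ge_0 z); lra).
    assert (h2ne : h2 <> RtoC 0) by (apply C_neq0_of_Cmod; rewrite Hh2; apply Rmult_lt_0_compat; [lra|pose proof (Cmod_ge_0 z); lra]).
    assert (U1 := T_over_h _ h1 A HA h1ne ltac:(eapply Rle_trans; [exact T1| right; unfold A; ring])).
    assert (U2 := T_over_h _ h2 A HA h2ne ltac:(eapply Rle_trans; [exact T2| right; unfold A; ring])).
    set (R1 := ((f (z + h1) - f z - h1 * K2 f rho z - h1 * h1 * K3 f rho z) / h1)%C) in *.
    set (R2 := ((f (z + h2) - f z - h2 * K2 f rho z - h2 * h2 * K3 f rho z) / h2)%C) in *.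
    assert (HK3 := E3_bound f Rad rho M r z Hf Hrho HM Hz Hrr). fold D in HK3. fold B3 in HK3.
    assert (Hz1 : Cmod (1 - z)%C <= 1 + r).
    { replace (1 - z)%C with (RtoC 1 + - z)%C by ring. eapply Rle_trans. apply Cmod_triangle.
      rewrite Cmod_opp, Cmod_1. lra. }
    assert (HQm : Cmod Qc = q) by (unfold Qc; rewrite Cmod_R, Rabs_pos_eq; lra).
    assert (HQ1m : Cmod (Qc - 1)%C = e) by (unfold Qc, e; rewrite <- RtoC_minus, Cmod_R, Rabs_pos_eq; lra).
    eapply Rle_lt_trans. apply Cmod_triangle.
    rewrite Cmod_div by auto. rewrite !Cmod_mult. rewrite HQm, HQ1m.
    assert (S1 : Cmod (1 - z)%C * e * Cmod z * Cmod (K3 f rho z) <= (1 + r) * e * r * B3).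
    { pose proof (Cmod_ge_0 (1 - z)%C). pose proof (Cmod_ge_0 (K3 f rho z)).
      apply mul4_le; lra. }
    assert (S2 : Cmod (R1 - R2)%C <= 2 * (A * (e * r) * (e * r))).
    { replace (R1 - R2)%C with (R1 + - R2)%C by ring. eapply Rle_trans. apply Cmod_triangle. rewrite Cmod_opp.
      assert (A * Cmod h1 * Cmod h1 <= A * (e * r) * (e * r)).
      { pose proof (Cmod_ge_0 h1). apply Rmult_le_compat; [apply Rmult_le_pos; lra|lra|apply Rmult_le_compat_l; lra|lra]. }
      assert (A * Cmod h2 * Cmod h2 <= A * (e * r) * (e * r)).
      { pose proof (Cmod_ge_0 h2). apply Rmult_le_compat; [apply Rmult_le_pos; lra|lra|apply Rmult_le_compat_l; lra|lra]. }
      lra. }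
    assert (S3 : Cmod (1 - z)%C * q * Cmod (R1 - R2)%C / e <= 4 * A * r * r * (1 + r) * e).
    { pose proof (Cmod_ge_0 (1 - z)%C). pose proof (Cmod_ge_0 (R1 - R2)%C).
      assert (Hq2 : q <= 2) by (unfold e in He1; lra).
      apply Rle_trans with ((1 + r) * 2 * (2 * (A * (e * r) * (e * r))) / e).
      unfold Rdiv. apply Rmult_le_compat_r. left; apply Rinv_0_lt_compat; lra.
      apply Rmult_le_compat. apply Rmult_le_pos; lra. auto. apply Rmult_le_compat; lra. auto.
      right. field. lra. }
    assert (Hfin : (1 + r) * e * r * B3 + 4 * A * r * r * (1 + r) * e = e * Cst) by (unfold Cst; ring).
    assert (e * Cst < eps).
    { apply Rle_lt_trans with (eps / (Cst + 1) * Cst). apply Rmult_le_compat_r; lra.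
      apply Rlt_le_trans with (eps / (Cst + 1) * (Cst + 1)). apply Rmult_lt_compat_l. apply Rdiv_lt_0_compat; lra. lra.
      right. field. lra. }
    lra.
Qed.
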